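(* In the setting of the context, the map $B\otimes M_1\to M_1$, $b\otimes x\mapsto b\triangleright x:=\lambda^{-1}E_{M_1}(bxe_2)$, defines a left $B$-module algebra structure on $M_1$ (with respect to the Hopf algebra structure of $B$ given in the context).
   Context: $k$ is a field; $C_R(S)=\{r\in R:rs=sr\ \forall s\in S\}$. $N\subseteq M$ is a strongly separable, irreducible extension of $k$-algebras: $C_M(N)=k1$ and there are an $N$-bimodule map $E:M\to N$ and $x_1,\dots,x_n,y_1,\dots,y_n\in M$ with $\sum_iE(mx_i)y_i=m=\sum_ix_iE(y_im)$ for all $m\in M$, $E(1)\neq0$, $\sum_ix_iy_i\neq0$; normalized so that $E(1)=1$, whence $\sum_ix_iy_i=\lambda^{-1}1$ with $0\neq\lambda\in k$. Basic construction: given $S\subseteq R$, an $S$-bimodule map $E_S:R\to S$ with $E_S(1)=1$ and $r_i,s_i\in R$ with $\sum_iE_S(rr_i)s_i=r=\sum_ir_iE_S(s_ir)$ and $\sum_ir_is_i=\lambda^{-1}1$, set $R_1=R\otimes_SR$ with product $(a\otimes b)(c\otimes d)=aE_S(bc)\otimes d$, unit $\sum_ir_i\otimes s_i$, $R\subseteq R_1$ via $r\mapsto\sum_irr_i\otimes s_i$, Jones idempotent $e=1\otimes1$, $E_R:R_1\to R$, $a\otimes b\mapsto\lambda ab$; then $E_R$, $\lambda^{-1}r_i\otimes1$, $1\otimes s_i$ satisfy the same conditions with the same $\lambda$. From $(N\subseteq M,E)$ get $M_1,e_1,E_M$; from $(M\subseteq M_1,E_M)$ get $M_2,e_2,E_{M_1}$.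 Let $A=C_{M_1}(N)$, $B=C_{M_2}(M)$, $C=C_{M_2}(N)$. Depth 2 is assumed: $M_1$ is free as right $M$-module with basis in $A$, $M_2$ free as right $M_1$-module with basis in $B$. Let $F=E_M\circ E_{M_1}$, with values on $C$ in $k1\cong k$. The form $\langle a,b\rangle=\lambda^{-2}F(ae_2e_1b)$ on $A\times B$ is non-degenerate; $B$ is a Hopf algebra with its algebra structure, $\Delta(b)=b_{(1)}\otimes b_{(2)}$ defined by $\langle a,b_{(1)}\rangle\langle a',b_{(2)}\rangle=\langle aa',b\rangle$ ($a,a'\in A$), counit $\varepsilon(b)=\langle1,b\rangle$, and antipode determined by $E_{M_1}(be_1e_2)=E_{M_1}(e_2e_1S(b))$. A left $B$-module algebra is an algebra with a left $B$-module structure such that $b\triangleright(xy)=(b_{(1)}\triangleright x)(b_{(2)}\triangleright y)$ and $b\triangleright1=\varepsilon(b)1$. *)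

(* Defs.v *)
From HB Require Import structures.
From mathcomp Require Import all_boot all_algebra.
From Stdlib Require Import IndefiniteDescription.
From Stdlib Require List.
Set Implicit Arguments. Unset Strict Implicit. Unset Printing Implicit Defensive.
Import GRing.Theory.
Local Open Scope ring_scope.

(* Axioms for the base algebra M come from its MathComp algType structure;
   for the constructed algebras M_1, M_2 they are consequences of the
   hypotheses (standard facts about the basic construction). *)
Record ralg (k : Type) := RAlg {
  rcar :> Type;
  rzero : rcar;
  radd : rcar -> rcar -> rcar;
  rscale : k -> rcar -> rcar;
  rmul : rcar -> rcar -> rcar;
  rone : rcar }.

Definition rsum (k : Type) (R : ralg k) (l : seq R) : R :=
  foldr (@radd k R) (@rzero k R) l.

Definition ralg_of (k : fieldType) (M : algType k) : ralg k :=
  @RAlg k M 0 +%R *:%R *%R 1.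

(* Input data of the basic construction: S ⊆ R, E_S : R -> S (valued in R),
   the quasi-basis (r_i, s_i) as a list of pairs, and lambda. *)
Record bdata (k : fieldType) := BData {
  bR : ralg k;
  bS : bR -> Prop;
  bE : bR -> bR;
  bqb : seq (bR * bR);
  blam : k }.

Section Basic.
Variables (k : fieldType) (D : bdata k).
Local Notation R := (bR D).
Local Notation "x + y" := (radd x y).
Local Notation "x * y" := (rmul x y).
Local Notation "c *: x" := (rscale c x).

Definition balanced (beta : R -> R -> k) : Prop :=
  [/\ forall a a' b, beta (a + a') b = (beta a b + beta a' b)%R,
      forall a b b', beta a (b + b') = (beta a b + beta a b')%R,
      forall c a b, beta (c *: a) b = (c * beta a b)%R,
      forall c a b, beta a (c *: b) = (c * beta a b)%R
    & forall s a b, @bS k D s -> beta (a * s) b = beta a (s * b)].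

Definition bal := {beta : R -> R -> k | balanced beta}.

(* formal sums  sum_t  c_t (a_t (x) b_t) *)
Definition evalT (l : seq (k * R * R)) (beta : R -> R -> k) : k :=
  (\sum_(t <- l) t.1.1 * beta t.1.2 t.2)%R.

(* R (x)_S R, realised as the image of the formal sums in the algebraic
   dual of the space of S-balanced bilinear forms (which is canonically
   isomorphic to the space Hom_k(R (x)_S R, k) and separates points). *)
Definition tens := {phi : bal -> k | exists l, phi = fun b => evalT l (sval b)}.

Definition tmk (l : seq (k * R * R)) : tens :=
  exist _ (fun b => evalT l (sval b)) (ex_intro _ l erefl).

Definition trep (x : tens) : seq (k * R * R) :=
  proj1_sig (constructive_indefinite_description _ (proj2_sig x)).

Definition t0 : tens := tmk [::].
Definition tadd (x y : tens) : tens := tmk (trep x ++ trep y).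
Definition tscale (c : k) (x : tens) : tens :=
  tmk [seq ((c * t.1.1)%R, t.1.2, t.2) | t <- trep x].
(* (a (x) b)(c (x) d) = a E_S(bc) (x) d *)
Definition tmul (x y : tens) : tens :=
  tmk [seq ((t.1.1 * u.1.1)%R, t.1.2 * @bE k D (t.2 * u.1.2), u.2)
      | t <- trep x, u <- trep y].
Definition t1 : tens := tmk [seq (1%R, p.1, p.2) | p <- bqb D].
Definition incl (r : R) : tens := tmk [seq (1%R, r * p.1, p.2) | p <- bqb D].
Definition jones : tens := tmk [:: (1%R, rone R, rone R)].
Definition tER (x : tens) : R :=
  rsum [seq (t.1.1 * blam D)%R *: (t.1.2 * t.2) | t <- trep x].

Definition tens_ralg : ralg k := @RAlg k tens t0 tadd tscale tmul t1.

Definition next : bdata k :=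
  @BData k tens_ralg (fun x => exists r, x = incl r) (fun x => incl (tER x))
    [seq (tscale (blam D)^-1 (tmk [:: (1%R, p.1, rone R)]),
          tmk [:: (1%R, rone R, p.2)]) | p <- bqb D]
    (blam D).
End Basic.

Section Tower.
Variables (k : fieldType) (D0 : bdata k).
Definition D1 := next D0.
Definition D2 := next D1.
Definition M1 : ralg k := bR D1.
Definition M2 : ralg k := bR D2.
Definition iota1 : bR D0 -> M1 := @incl k D0.
Definition iota2 : M1 -> M2 := @incl k D1.
Definition e1 : M1 := jones D0.
Definition e2 : M2 := jones D1.
Definition EM : M1 -> bR D0 := @tER k D0.
Definition EM1 : M2 -> M1 := @tER k D1.
Definition FF (x : M2) : bR D0 := EM (EM1 x).
Definition lam := blam D0.

Definition inA (a : M1) : Prop :=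
  forall n, @bS k D0 n -> rmul a (iota1 n) = rmul (iota1 n) a.
Definition inB (b : M2) : Prop :=
  forall m : bR D0, rmul b (iota2 (iota1 m)) = rmul (iota2 (iota1 m)) b.

(* <a, b> = lambda^-2 F(a e_2 e_1 b), an element of k1 ⊆ M *)
Definition pairing (a : M1) (b : M2) : bR D0 :=
  rscale (lam ^- 2) (FF (rmul (rmul (rmul (iota2 a) e2) (iota2 e1)) b)).

Definition act (b : M2) (x : M1) : M1 :=
  rscale (lam ^-1) (EM1 (rmul (rmul b (iota2 x)) e2)).

Definition free_right_basis (S T : ralg k) (j : S -> T) (P : T -> Prop) :=
  exists m (bs : 'I_m -> T),
    (forall i, P (bs i)) /\
    (forall x : T, exists cs : 'I_m -> S,
        x = rsum [seq rmul (bs i) (j (cs i)) | i <- enum 'I_m]) /\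
    (forall cs cs' : 'I_m -> S,
        rsum [seq rmul (bs i) (j (cs i)) | i <- enum 'I_m] =
        rsum [seq rmul (bs i) (j (cs' i)) | i <- enum 'I_m] -> cs = cs').

Definition depth2 : Prop :=
  free_right_basis iota1 inA /\ free_right_basis iota2 inB.

(* M_1 is a left B-module algebra under |>, where Delta(b) is given by
   any sum  sum_j b1_j (x) b2_j  in B (x) B satisfying the defining identity
   <a, b1_j><a', b2_j> = <aa', b>  for all a, a' in A. *)
Definition left_module_algebra : Prop :=
  (forall b b' x, inB b -> inB b' -> act (rmul b b') x = act b (act b' x)) /\
      (forall x, act (rone M2) x = x) /\
      (forall b b' x, inB b -> inB b' ->
          act (radd b b') x = radd (act b x) (act b' x)) /\
      (forall (c : k) b x, inB b -> act (rscale c b) x = rscale c (act b x)) /\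
      (forall b x y, inB b -> act b (radd x y) = radd (act b x) (act b y)) /\
      (forall (c : k) b x, inB b -> act b (rscale c x) = rscale c (act b x)) /\
      (forall b (x y : M1) (d : seq (M2 * M2)), inB b ->
          (forall p, List.In p d -> inB p.1 /\ inB p.2) ->
          (forall a a', inA a -> inA a' ->
             rsum [seq rmul (pairing a p.1) (pairing a' p.2) | p <- d]
             = pairing (rmul a a') b) ->
          act b (rmul x y) = rsum [seq rmul (act p.1 x) (act p.2 y) | p <- d])
    /\ (forall b, inB b -> act b (rone M1) = iota1 (pairing (rone M1) b)).
End Tower.

Definition base_data (k : fieldType) (M : algType k) (N : {pred M})
  (E : M -> M) (qb : seq (M * M)) (lambda : k) : bdata k :=
  @BData k (ralg_of M) (fun m => m \in N) E qb lambda.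

(* Main.v *)
Require Import Defs.
From HB Require Import structures.
From mathcomp Require Import all_boot all_algebra.
From Stdlib Require Import ProofIrrelevance FunctionalExtensionality IndefiniteDescription Classical.
Set Implicit Arguments. Unset Strict Implicit. Unset Printing Implicit Defensive.
Import GRing.Theory.
Local Open Scope ring_scope.

Declare Scope ralg_scope.
Delimit Scope ralg_scope with RA.
Notation "x ⊞ y" := (radd x y) (at level 50, left associativity) : ralg_scope.
Notation "c ⊙ x" := (rscale c x) (at level 40) : ralg_scope.
Notation "x ⊠ y" := (rmul x y) (at level 40, left associativity) : ralg_scope.
Open Scope ralg_scope.

Definition rlinear (k : fieldType) (R : ralg k) (phi : R -> k) :=
  (forall a b, phi (a ⊞ b) = phi a + phi b) /\ (forall c a, phi (c ⊙ a) = c * phi a).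

Record good (k : fieldType) (D : bdata k) : Prop := Good {
  g_addA : forall x y z : bR D, x ⊞ (y ⊞ z) = (x ⊞ y) ⊞ z;
  g_addC : forall x y : bR D, x ⊞ y = y ⊞ x;
  g_add0 : forall x : bR D, rzero (bR D) ⊞ x = x;
  g_addN : forall x : bR D, x ⊞ ((-1) ⊙ x) = rzero (bR D);
  g_scD : forall c (x y : bR D), c ⊙ (x ⊞ y) = c ⊙ x ⊞ c ⊙ y;
  g_scDl : forall c d (x : bR D), (c + d) ⊙ x = c ⊙ x ⊞ d ⊙ x;
  g_scM : forall c d (x : bR D), c ⊙ (d ⊙ x) = (c * d) ⊙ x;
  g_sc1 : forall x : bR D, 1 ⊙ x = x;
  g_mulA : forall x y z : bR D, x ⊠ (y ⊠ z) = (x ⊠ y) ⊠ z;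
  g_mulDl : forall x y z : bR D, (x ⊞ y) ⊠ z = x ⊠ z ⊞ y ⊠ z;
  g_mulDr : forall x y z : bR D, x ⊠ (y ⊞ z) = x ⊠ y ⊞ x ⊠ z;
  g_mulZl : forall c (x y : bR D), (c ⊙ x) ⊠ y = c ⊙ (x ⊠ y);
  g_mulZr : forall c (x y : bR D), x ⊠ (c ⊙ y) = c ⊙ (x ⊠ y);
  g_mul1l : forall x : bR D, rone (bR D) ⊠ x = x;
  g_mul1r : forall x : bR D, x ⊠ rone (bR D) = x;
  g_ES : forall x, @bS k D (@bE k D x);
  g_ED : forall x y, @bE k D (x ⊞ y) = @bE k D x ⊞ @bE k D y;
  g_EZ : forall c x, @bE k D (c ⊙ x) = c ⊙ @bE k D x;
  g_EL : forall s x, @bS k D s -> @bE k D (s ⊠ x) = s ⊠ @bE k D x;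
  g_ER : forall s x, @bS k D s -> @bE k D (x ⊠ s) = @bE k D x ⊠ s;
  g_E1 : @bE k D (rone (bR D)) = rone (bR D);
  g_qb1 : forall x, rsum [seq @bE k D (x ⊠ p.1) ⊠ p.2 | p <- bqb D] = x;
  g_qb2 : forall x, rsum [seq p.1 ⊠ @bE k D (p.2 ⊠ x) | p <- bqb D] = x;
  g_qbl : rsum [seq p.1 ⊠ p.2 | p <- bqb D] = (blam D)^-1 ⊙ rone (bR D);
  g_lam : blam D != 0 }.

Section Gen.
Variables (k : fieldType) (D : bdata k).
Hypothesis G : good D.
Local Notation R := (bR D).
Local Notation T := (tens D).
Local Notation E := (@bE k D).
Local Notation qb := (bqb D).
Local Notation lam := (blam D).
Local Notation "0r" := (rzero R).
Local Notation "1r" := (rone R).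

Lemma raddA x y z : x ⊞ (y ⊞ z) = (x ⊞ y) ⊞ z :> R. Proof. exact: g_addA. Qed.
Lemma raddC (x y : R) : x ⊞ y = y ⊞ x. Proof. exact: g_addC. Qed.
Lemma radd0l (x : R) : 0r ⊞ x = x. Proof. exact: g_add0. Qed.
Lemma radd0r (x : R) : x ⊞ 0r = x. Proof. by rewrite raddC radd0l. Qed.
Lemma raddK (x y : R) : x ⊞ y ⊞ ((-1) ⊙ y) = x.
Proof. by rewrite -raddA g_addN // radd0r. Qed.
Lemma radd_inj (x y z : R) : x ⊞ z = y ⊞ z -> x = y.
Proof. by move=> H; rewrite -(raddK x z) H raddK. Qed.
Lemma rscale0 (x : R) : 0 ⊙ x = 0r.
Proof. apply: (@radd_inj _ _ (0 ⊙ x)); by rewrite -g_scDl // addr0 radd0l. Qed.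
Lemma rscalex0 c : c ⊙ 0r = 0r.
Proof. by rewrite -{1}(rscale0 0r) g_scM // mulr0 rscale0. Qed.
Lemma rmul0r (x : R) : 0r ⊠ x = 0r.
Proof. by rewrite -{1}(rscale0 0r) g_mulZl // rscale0. Qed.
Lemma rmulr0 (x : R) : x ⊠ 0r = 0r.
Proof. by rewrite -{1}(rscale0 0r) g_mulZr // rscale0. Qed.
Lemma E0 : E 0r = 0r.
Proof. by rewrite -{1}(rscale0 0r) g_EZ // rscale0. Qed.

Lemma rsum_cons (x : R) l : rsum (x :: l) = x ⊞ rsum l. Proof. by []. Qed.
Lemma rsum_nil : rsum [::] = 0r :> R. Proof. by []. Qed.

Lemma rlin_rsum (phi : R -> k) l : rlinear phi -> phi (rsum l) = \sum_(x <- l) phi x.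
Proof.
move=> [Ha Hs]; elim: l => [|x l IH].
  by rewrite big_nil /= -(rscale0 0r) Hs mul0r.
by rewrite big_cons /= Ha IH.
Qed.

Lemma rsum_mulr (l : seq R) y : rsum l ⊠ y = rsum [seq x ⊠ y | x <- l].
Proof. elim: l => [|x l IH] /=; first by rewrite rmul0r. by rewrite g_mulDl // IH. Qed.
Lemma rsum_mull (l : seq R) y : y ⊠ rsum l = rsum [seq y ⊠ x | x <- l].
Proof. elim: l => [|x l IH] /=; first by rewrite rmulr0. by rewrite g_mulDr // IH. Qed.

Lemma bal_add1 g : @balanced k D g -> forall a a' b, g (a ⊞ a') b = g a b + g a' b.
Proof. by case. Qed.
Lemma bal_add2 g : @balanced k D g -> forall a b b', g a (b ⊞ b') = g a b + g a b'.
Proof. by case. Qed.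
Lemma bal_sc1 g : @balanced k D g -> forall c a b, g (c ⊙ a) b = c * g a b.
Proof. by case. Qed.
Lemma bal_sc2 g : @balanced k D g -> forall c a b, g a (c ⊙ b) = c * g a b.
Proof. by case. Qed.
Lemma bal_S g : @balanced k D g -> forall s a b, @bS k D s -> g (a ⊠ s) b = g a (s ⊠ b).
Proof. by case. Qed.
Lemma bal_lin1 g b : @balanced k D g -> rlinear (fun a => g a b).
Proof. by move=> Hg; split=> *; [rewrite bal_add1|rewrite bal_sc1]. Qed.
Lemma bal_lin2 g a : @balanced k D g -> rlinear (fun b => g a b).
Proof. by move=> Hg; split=> *; [rewrite bal_add2|rewrite bal_sc2]. Qed.
Lemma bal_rsum1 g l b : @balanced k D g -> g (rsum l) b = \sum_(x <- l) g x b.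
Proof. by move=> Hg; rewrite (rlin_rsum _ (bal_lin1 b Hg)). Qed.
Lemma bal_rsum2 g a l : @balanced k D g -> g a (rsum l) = \sum_(x <- l) g a x.
Proof. by move=> Hg; rewrite (rlin_rsum _ (bal_lin2 a Hg)). Qed.

Definition evf (x : T) (g : R -> R -> k) : k := evalT (trep x) g.

Lemma trepP (x : T) : sval x = fun b : bal D => evalT (trep x) (sval b).
Proof. by rewrite /trep; case: constructive_indefinite_description. Qed.

Lemma tens_ext (x y : T) : (forall g, @balanced k D g -> evf x g = evf y g) -> x = y.
Proof.
move=> H.
have E1 : sval x = sval y.
  apply: functional_extensionality => b; rewrite trepP [in RHS]trepP.
  by case: b => g Hg /=; apply: H.
move: x y E1 {H} => [f Hf] [f' Hf'] /= E1; subst f'.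
by rewrite (proof_irrelevance _ Hf Hf').
Qed.

Lemma evf_tmk l g : @balanced k D g -> evf (tmk l) g = evalT l g.
Proof.
move=> Hg; rewrite /evf.
have := trepP (tmk l) => /(f_equal (fun f => f (exist _ g Hg))) /= <-.
by [].
Qed.

Lemma evalT_ext (l : seq (k * R * R)) (g g' : R -> R -> k) : (forall a b, g a b = g' a b) -> evalT l g = evalT l g'.
Proof. by move=> H; apply: eq_bigr => t _; rewrite H. Qed.
Lemma evf_ext x g g' : (forall a b, g a b = g' a b) -> evf x g = evf x g'.
Proof. exact: evalT_ext. Qed.
Lemma evf_addf x g g' : evf x (fun a b => g a b + g' a b) = evf x g + evf x g'.
Proof. by rewrite /evf /evalT -big_split /=; apply: eq_bigr => t _; rewrite mulrDr. Qed.
Lemma evf_scf x c g : evf x (fun a b => c * g a b) = c * evf x g.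
Proof. by rewrite /evf /evalT mulr_sumr; apply: eq_bigr => t _; rewrite mulrCA. Qed.
Lemma evf_sumf I (s : seq I) x (g : I -> R -> R -> k) :
  evf x (fun a b => \sum_(i <- s) g i a b) = \sum_(i <- s) evf x (g i).
Proof.
rewrite /evf /evalT exchange_big /=; apply: eq_bigr => t _.
by rewrite mulr_sumr.
Qed.
Lemma evf_0f x : evf x (fun _ _ => 0) = 0.
Proof. by rewrite /evf /evalT big1 // => t _; rewrite mulr0. Qed.

Definition pt (a b : R) : T := tmk [:: (1, a, b)].
Definition tsum (l : seq T) : T := foldr (@tadd k D) (t0 D) l.

Lemma evf_pt a b g : @balanced k D g -> evf (pt a b) g = g a b.
Proof. by move=> Hg; rewrite evf_tmk // /evalT big_cons big_nil mul1r addr0. Qed.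
Lemma evf_t0 g : @balanced k D g -> evf (t0 D) g = 0.
Proof. by move=> Hg; rewrite evf_tmk // /evalT big_nil. Qed.
Lemma evf_tadd x y g : @balanced k D g -> evf (tadd x y) g = evf x g + evf y g.
Proof. by move=> Hg; rewrite evf_tmk // /evalT big_cat. Qed.
Lemma evf_tscale c x g : @balanced k D g -> evf (tscale c x) g = c * evf x g.
Proof.
move=> Hg; rewrite evf_tmk // /evalT big_map mulr_sumr; apply: eq_bigr => t _.
by rewrite mulrA.
Qed.
Lemma evf_tsum l g : @balanced k D g -> evf (tsum l) g = \sum_(x <- l) evf x g.
Proof.
move=> Hg; elim: l => [|x l IH] /=; first by rewrite big_nil evf_t0.
by rewrite big_cons evf_tadd // IH.
Qed.
Lemma evf_tmul x y g : @balanced k D g ->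
  evf (tmul x y) g = evf x (fun a b => evf y (fun c d => g (a ⊠ E (b ⊠ c)) d)).
Proof.
move=> Hg; rewrite evf_tmk // /evalT /evf /evalT.
rewrite big_allpairs_dep /=; apply: eq_bigr => t _.
rewrite mulr_sumr; apply: eq_bigr => u _.
by rewrite mulrA.
Qed.
Lemma evf_t1 g : @balanced k D g -> evf (t1 D) g = \sum_(p <- qb) g p.1 p.2.
Proof. by move=> Hg; rewrite evf_tmk // /evalT big_map; apply: eq_bigr => p _; rewrite mul1r. Qed.
Lemma evf_incl r g : @balanced k D g -> evf (incl r) g = \sum_(p <- qb) g (r ⊠ p.1) p.2.
Proof. by move=> Hg; rewrite evf_tmk // /evalT big_map; apply: eq_bigr => p _; rewrite mul1r. Qed.
Lemma evf_jones g : @balanced k D g -> evf (jones D) g = g 1r 1r.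
Proof. exact: evf_pt. Qed.


Local Notation bal := (@balanced k D).

Lemma bal_evf y (Gf : R -> R -> R -> R -> k) :
  (forall c d, bal (fun a b => Gf a b c d)) -> bal (fun a b => evf y (Gf a b)).
Proof.
move=> H; split.
- by move=> a a' b; rewrite -evf_addf; apply: evf_ext => c d; apply: bal_add1 (H c d) _ _ _.
- by move=> a b b'; rewrite -evf_addf; apply: evf_ext => c d; apply: bal_add2 (H c d) _ _ _.
- by move=> c a b; rewrite -evf_scf; apply: evf_ext => c' d; apply: bal_sc1 (H c' d) _ _ _.
- by move=> c a b; rewrite -evf_scf; apply: evf_ext => c' d; apply: bal_sc2 (H c' d) _ _ _.
- by move=> s a b Hs; apply: evf_ext => c d; apply: bal_S (H c d) _ _ _ Hs.
Qed.

Lemma bal_mf_in g a b : bal g -> bal (fun c d => g (a ⊠ E (b ⊠ c)) d).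
Proof.
move=> Hg; split.
- by move=> c c' d; rewrite g_mulDr // g_ED // g_mulDr // bal_add1.
- by move=> c d d'; rewrite bal_add2.
- by move=> s c d; rewrite g_mulZr // g_EZ // g_mulZr // bal_sc1.
- by move=> s c d; rewrite bal_sc2.
- move=> s c d Hs; rewrite g_mulA // g_ER // g_mulA //; exact: bal_S.
Qed.

Lemma bal_mf_out g c d : bal g -> bal (fun a b => g (a ⊠ E (b ⊠ c)) d).
Proof.
move=> Hg; split.
- by move=> a a' b; rewrite g_mulDl // bal_add1.
- by move=> a b b'; rewrite g_mulDl // g_ED // g_mulDr // bal_add1.
- by move=> s a b; rewrite g_mulZl // bal_sc1.
- by move=> s a b; rewrite g_mulZl // g_EZ // g_mulZr // bal_sc1.
- move=> s a b Hs; rewrite -[(s ⊠ b) ⊠ c]g_mulA // (g_EL G _ Hs) g_mulA //.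
Qed.

Lemma bal_tmf y g : bal g -> bal (fun a b => evf y (fun c d => g (a ⊠ E (b ⊠ c)) d)).
Proof. by move=> Hg; apply: bal_evf => c d; apply: bal_mf_out. Qed.

Lemma taddA x y z : tadd x (tadd y z) = tadd (tadd x y) z :> T.
Proof. by apply: tens_ext => g Hg; rewrite !evf_tadd // addrA. Qed.
Lemma taddC (x y : T) : tadd x y = tadd y x.
Proof. by apply: tens_ext => g Hg; rewrite !evf_tadd // addrC. Qed.
Lemma tadd0 (x : T) : tadd (t0 D) x = x.
Proof. by apply: tens_ext => g Hg; rewrite !evf_tadd // evf_t0 // add0r. Qed.
Lemma taddN (x : T) : tadd x (tscale (-1) x) = t0 D.
Proof. by apply: tens_ext => g Hg; rewrite !evf_tadd // evf_tscale // evf_t0 // mulN1r subrr. Qed.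
Lemma tscD c (x y : T) : tscale c (tadd x y) = tadd (tscale c x) (tscale c y).
Proof. by apply: tens_ext => g Hg; rewrite !(evf_tadd, evf_tscale) // mulrDr. Qed.
Lemma tscDl c d (x : T) : tscale (c + d) x = tadd (tscale c x) (tscale d x).
Proof. by apply: tens_ext => g Hg; rewrite !(evf_tadd, evf_tscale) // mulrDl. Qed.
Lemma tscM c d (x : T) : tscale c (tscale d x) = tscale (c * d) x.
Proof. by apply: tens_ext => g Hg; rewrite !evf_tscale // mulrA. Qed.
Lemma tsc1 (x : T) : tscale 1 x = x.
Proof. by apply: tens_ext => g Hg; rewrite !evf_tscale // mul1r. Qed.

Lemma tmulA (x y z : T) : tmul x (tmul y z) = tmul (tmul x y) z.
Proof.
apply: tens_ext => g Hg.
rewrite [RHS]evf_tmul // [RHS]evf_tmul; last exact: bal_tmf.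
rewrite [LHS]evf_tmul //; apply: evf_ext => a b.
rewrite evf_tmul; last exact: bal_mf_in.
apply: evf_ext => c d; apply: evf_ext => e f.
by rewrite (g_mulA G b) (g_ER G _ (g_ES G _)) g_mulA.
Qed.

Lemma tmulDl (x x' y : T) : tmul (tadd x x') y = tadd (tmul x y) (tmul x' y).
Proof.
apply: tens_ext => g Hg.
by rewrite evf_tadd // !evf_tmul // evf_tadd //; exact: bal_tmf.
Qed.
Lemma tmulDr (x y y' : T) : tmul x (tadd y y') = tadd (tmul x y) (tmul x y').
Proof.
apply: tens_ext => g Hg.
rewrite evf_tadd // !evf_tmul // -evf_addf; apply: evf_ext => a b.
by rewrite evf_tadd //; exact: bal_mf_in.
Qed.
Lemma tmulZl c (x y : T) : tmul (tscale c x) y = tscale c (tmul x y).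
Proof.
apply: tens_ext => g Hg.
by rewrite evf_tscale // !evf_tmul // evf_tscale //; exact: bal_tmf.
Qed.
Lemma tmulZr c (x y : T) : tmul x (tscale c y) = tscale c (tmul x y).
Proof.
apply: tens_ext => g Hg.
rewrite evf_tscale // !evf_tmul // -evf_scf; apply: evf_ext => a b.
by rewrite evf_tscale //; exact: bal_mf_in.
Qed.

Lemma sum_qb2 g c d : bal g ->
  \sum_(p <- qb) g (p.1 ⊠ E (p.2 ⊠ c)) d = g c d.
Proof.
move=> Hg; rewrite -[in RHS](g_qb2 G c) bal_rsum1 // big_map //.
Qed.
Lemma sum_qb1 g a b : bal g ->
  \sum_(p <- qb) g (a ⊠ E (b ⊠ p.1)) p.2 = g a b.
Proof.
move=> Hg; rewrite -[in RHS](g_qb1 G b) bal_rsum2 // big_map.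
by apply: eq_bigr => p _; rewrite (bal_S Hg _ _ (g_ES G _)).
Qed.

Lemma tmul1l (x : T) : tmul (t1 D) x = x.
Proof.
apply: tens_ext => g Hg.
rewrite evf_tmul // evf_t1; last exact: bal_tmf.
rewrite -evf_sumf; apply: evf_ext => c d; exact: sum_qb2.
Qed.
Lemma tmul1r (x : T) : tmul x (t1 D) = x.
Proof.
apply: tens_ext => g Hg.
rewrite evf_tmul //; apply: evf_ext => a b.
rewrite evf_t1; last exact: bal_mf_in.
exact: sum_qb1.
Qed.

Lemma evf_inclmul r x g : bal g -> evf (tmul (incl r) x) g = evf x (fun c d => g (r ⊠ c) d).
Proof.
move=> Hg; rewrite evf_tmul // evf_incl; last exact: bal_tmf.
rewrite -evf_sumf; apply: evf_ext => c d.
have -> : r ⊠ c = rsum [seq r ⊠ (p.1 ⊠ E (p.2 ⊠ c)) | p <- qb].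
  by rewrite -{1}(g_qb2 G c) rsum_mull -map_comp.
rewrite bal_rsum1 // big_map.
by apply: eq_bigr => p _; rewrite g_mulA.
Qed.
Lemma evf_mulincl r x g : bal g -> evf (tmul x (incl r)) g = evf x (fun a b => g a (b ⊠ r)).
Proof.
move=> Hg; rewrite evf_tmul //; apply: evf_ext => a b.
rewrite evf_incl; last exact: bal_mf_in.
by rewrite -(sum_qb1 a (b ⊠ r) Hg); apply: eq_bigr => p _; rewrite g_mulA.
Qed.
Lemma evf_ptmul a b x g : bal g -> evf (tmul (pt a b) x) g = evf x (fun c d => g (a ⊠ E (b ⊠ c)) d).
Proof. by move=> Hg; rewrite evf_tmul // evf_pt //; exact: bal_tmf. Qed.

Lemma bal_lmul g r : bal g -> bal (fun c d => g (r ⊠ c) d).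
Proof.
move=> Hg; split.
- by move=> *; rewrite g_mulDr // bal_add1.
- by move=> *; rewrite bal_add2.
- by move=> *; rewrite g_mulZr // bal_sc1.
- by move=> *; rewrite bal_sc2.
- by move=> s a b Hs; rewrite g_mulA // bal_S.
Qed.
Lemma bal_rmul g r : bal g -> bal (fun c d => g c (d ⊠ r)).
Proof.
move=> Hg; split.
- by move=> *; rewrite bal_add1.
- by move=> *; rewrite g_mulDl // bal_add2.
- by move=> *; rewrite bal_sc1.
- by move=> *; rewrite g_mulZl // bal_sc2.
- by move=> s a b Hs; rewrite -g_mulA // bal_S.
Qed.

Lemma incl_mul (r s : R) : incl (r ⊠ s) = tmul (incl r) (incl s).
Proof.
apply: tens_ext => g Hg; rewrite evf_inclmul // !evf_incl //; last exact: bal_lmul.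
by apply: eq_bigr => p _; rewrite g_mulA.
Qed.
Lemma incl_add (r s : R) : incl (r ⊞ s) = tadd (incl r) (incl s).
Proof.
apply: tens_ext => g Hg; rewrite evf_tadd // !evf_incl // -big_split /=.
by apply: eq_bigr => p _; rewrite g_mulDl // bal_add1.
Qed.
Lemma incl_scale c (r : R) : incl (c ⊙ r) = tscale c (incl r).
Proof.
apply: tens_ext => g Hg; rewrite evf_tscale // !evf_incl // mulr_sumr.
by apply: eq_bigr => p _; rewrite g_mulZl // bal_sc1.
Qed.
Lemma incl1 : incl 1r = t1 D.
Proof.
apply: tens_ext => g Hg; rewrite evf_incl // evf_t1 //.
by apply: eq_bigr => p _; rewrite g_mul1l.
Qed.

Lemma pt_mul a b c d : tmul (pt a b) (pt c d) = pt (a ⊠ E (b ⊠ c)) d.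
Proof. by apply: tens_ext => g Hg; rewrite evf_ptmul // !evf_pt //; exact: bal_mf_in. Qed.
Lemma incl_pt r a b : tmul (incl r) (pt a b) = pt (r ⊠ a) b.
Proof. by apply: tens_ext => g Hg; rewrite evf_inclmul // !evf_pt //; exact: bal_lmul. Qed.
Lemma pt_incl r a b : tmul (pt a b) (incl r) = pt a (b ⊠ r).
Proof. by apply: tens_ext => g Hg; rewrite evf_mulincl // !evf_pt //; exact: bal_rmul. Qed.
Lemma pt_S s a b : @bS k D s -> pt (a ⊠ s) b = pt a (s ⊠ b).
Proof. by move=> Hs; apply: tens_ext => g Hg; rewrite !evf_pt // bal_S. Qed.
Lemma pt_add1 a a' b : pt (a ⊞ a') b = tadd (pt a b) (pt a' b).
Proof. by apply: tens_ext => g Hg; rewrite evf_tadd // !evf_pt // bal_add1. Qed.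
Lemma pt_add2 a b b' : pt a (b ⊞ b') = tadd (pt a b) (pt a b').
Proof. by apply: tens_ext => g Hg; rewrite evf_tadd // !evf_pt // bal_add2. Qed.
Lemma pt_sc1 c a b : pt (c ⊙ a) b = tscale c (pt a b).
Proof. by apply: tens_ext => g Hg; rewrite evf_tscale // !evf_pt // bal_sc1. Qed.
Lemma pt_sc2 c a b : pt a (c ⊙ b) = tscale c (pt a b).
Proof. by apply: tens_ext => g Hg; rewrite evf_tscale // !evf_pt // bal_sc2. Qed.
Lemma jonesE : jones D = pt 1r 1r. Proof. by []. Qed.
Lemma t1E : t1 D = tsum [seq pt p.1 p.2 | p <- qb].
Proof.
apply: tens_ext => g Hg; rewrite evf_t1 // evf_tsum // big_map.
by apply: eq_bigr => p _; rewrite evf_pt.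
Qed.
Lemma inclE r : incl r = tsum [seq pt (r ⊠ p.1) p.2 | p <- qb].
Proof.
apply: tens_ext => g Hg; rewrite evf_incl // evf_tsum // big_map.
by apply: eq_bigr => p _; rewrite evf_pt.
Qed.

Lemma tens_decomp (x : T) : x = tsum [seq tscale t.1.1 (pt t.1.2 t.2) | t <- trep x].
Proof.
apply: tens_ext => g Hg; rewrite evf_tsum // big_map.
rewrite [LHS]/evf /evalT; apply: eq_bigr => t _; by rewrite evf_tscale // evf_pt.
Qed.

Lemma tens_ind (P : T -> Prop) :
  P (t0 D) -> (forall x y, P x -> P y -> P (tadd x y)) ->
  (forall c x, P x -> P (tscale c x)) -> (forall a b, P (pt a b)) -> forall x, P x.
Proof.
move=> H0 HD HZ Hp x; rewrite (tens_decomp x).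
elim: (trep x) => [|t l IH] //=.
by apply: HD => //; apply: HZ.
Qed.

Lemma bal_tERf phi : rlinear phi -> bal (fun a b => lam * phi (a ⊠ b)).
Proof.
move=> [Ha Hs]; split.
- by move=> a a' b; rewrite g_mulDl // Ha mulrDr.
- by move=> a b b'; rewrite g_mulDr // Ha mulrDr.
- by move=> c a b; rewrite g_mulZl // Hs mulrCA.
- by move=> c a b; rewrite g_mulZr // Hs mulrCA.
- by move=> s a b _; rewrite g_mulA.
Qed.

Lemma tER_lin phi x : rlinear phi -> phi (tER x) = evf x (fun a b => lam * phi (a ⊠ b)).
Proof.
move=> Hphi; rewrite /tER (rlin_rsum _ Hphi) big_map /evf /evalT.
by apply: eq_bigr => t _; case: Hphi => _ ->; rewrite mulrA.
Qed.

Lemma rlin_g1 g d : bal g -> rlinear (fun w => g w d).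
Proof. exact: bal_lin1. Qed.
Lemma rlin_gmul g c d : bal g -> rlinear (fun w => g (w ⊠ c) d).
Proof. by move=> Hg; split=> *; rewrite ?g_mulDl ?g_mulZl // ?bal_add1 ?bal_sc1. Qed.
Lemma rlin_comp (phi : R -> k) (f : R -> R) : rlinear phi ->
  (forall a b, f (a ⊞ b) = f a ⊞ f b) -> (forall c a, f (c ⊙ a) = c ⊙ f a) ->
  rlinear (fun w => phi (f w)).
Proof. by move=> [Ha Hs] Hf1 Hf2; split=> *; rewrite ?Hf1 ?Hf2 ?Ha ?Hs. Qed.


Definition phiI (g : R -> R -> k) (w : R) : k := \sum_(p <- qb) g (w ⊠ p.1) p.2.
Lemma rlin_phiI g : bal g -> rlinear (phiI g).
Proof.
move=> Hg; split.
- by move=> a b; rewrite /phiI -big_split; apply: eq_bigr => p _; rewrite g_mulDl // bal_add1.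
- by move=> c a; rewrite /phiI mulr_sumr; apply: eq_bigr => p _; rewrite g_mulZl // bal_sc1.
Qed.
Lemma evf_incl' w g : bal g -> evf (incl w) g = phiI g w.
Proof. exact: evf_incl. Qed.
Definition PhiE (g : R -> R -> k) := fun a b => lam * phiI g (a ⊠ b).
Lemma bal_PhiE g : bal g -> bal (PhiE g).
Proof. by move=> Hg; apply: bal_tERf; apply: rlin_phiI. Qed.
Lemma evf_E1 x g : bal g -> evf (incl (tER x)) g = evf x (PhiE g).
Proof. by move=> Hg; rewrite evf_incl' // tER_lin //; apply: rlin_phiI. Qed.

Lemma tens_sep (x y : T) : (forall phi : T -> k, rlinear (R := tens_ralg D) phi -> phi x = phi y) -> x = y.
Proof.
move=> H; apply: tens_ext => g Hg; apply: (H (fun z => evf z g)); split.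
- by move=> a b; exact: evf_tadd.
- by move=> c a; exact: evf_tscale.
Qed.

Lemma evf_rsumT (l : seq T) g : bal g -> evf (rsum (R := tens_ralg D) l) g = \sum_(x <- l) evf x g.
Proof. exact: evf_tsum. Qed.

Lemma qbn1_term x y z g : bal g ->
  evf (tmul (incl (tER (tmul x (tscale lam^-1 (pt z 1r))))) (pt 1r y)) g =
  evf x (fun a b => g (a ⊠ E (b ⊠ z)) y).
Proof.
move=> Hg; rewrite evf_inclmul // evf_pt; last exact: bal_lmul.
rewrite g_mul1r // (tER_lin _ (bal_lin1 y Hg)) tmulZr evf_tscale; last exact: bal_tERf (bal_lin1 y Hg).
rewrite evf_tmul; last exact: bal_tERf (bal_lin1 y Hg).
rewrite -evf_scf; apply: evf_ext => a b.
rewrite evf_pt; last exact: bal_mf_in (bal_tERf (bal_lin1 y Hg)).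
by rewrite g_mul1r // mulrA mulVf ?(g_lam G) // mul1r.
Qed.

Lemma qbn2_term x y z g : bal g ->
  evf (tmul (tscale lam^-1 (pt z 1r)) (incl (tER (tmul (pt 1r y) x)))) g =
  evf x (fun c d => g (z ⊠ E (y ⊠ c)) d).
Proof.
move=> Hg; rewrite tmulZl evf_tscale // pt_incl evf_pt // g_mul1l //.
rewrite (tER_lin _ (bal_lin2 z Hg)) evf_ptmul; last exact: bal_tERf (bal_lin2 z Hg).
rewrite -evf_scf; apply: evf_ext => c d.
by rewrite g_mul1l // -(bal_S Hg _ _ (g_ES G _)) mulrA mulVf ?(g_lam G) // mul1r.
Qed.

Lemma good_next : good (Defs.next D).
Proof.
split.
- exact: taddA.
- exact: taddC.
- exact: tadd0.
- exact: taddN.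
- exact: tscD.
- exact: tscDl.
- exact: tscM.
- exact: tsc1.
- exact: tmulA.
- exact: tmulDl.
- exact: tmulDr.
- exact: tmulZl.
- exact: tmulZr.
- exact: tmul1l.
- exact: tmul1r.
- by move=> x; exists (tER x).
- move=> x y; apply: tens_ext => g Hg; rewrite /= evf_tadd // !evf_E1 // evf_tadd //.
  exact: bal_PhiE.
- move=> c x; apply: tens_ext => g Hg; rewrite /= evf_tscale // !evf_E1 // evf_tscale //.
  exact: bal_PhiE.
- move=> s x [r ->]; apply: tens_ext => g Hg; rewrite /= evf_E1 // evf_inclmul //; last exact: bal_PhiE.
  rewrite evf_inclmul // evf_E1 //; last exact: bal_lmul.
  apply: evf_ext => a b; rewrite /PhiE /phiI; congr (_ * _); apply: eq_bigr => p _.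
  by rewrite !g_mulA.
- move=> s x [r ->]; apply: tens_ext => g Hg; rewrite /= evf_E1 // evf_mulincl //; last exact: bal_PhiE.
  rewrite evf_mulincl // evf_E1 //; last exact: bal_rmul.
  apply: evf_ext => a b; rewrite /PhiE; congr (_ * _).
  rewrite -evf_incl' // -evf_incl'; last exact: bal_rmul.
  by rewrite -evf_mulincl // -incl_mul g_mulA.
- apply: tens_ext => g Hg; rewrite /= evf_E1 // evf_t1 //; last exact: bal_PhiE.
  rewrite /PhiE -mulr_sumr.
  have -> : \sum_(p <- qb) phiI g (p.1 ⊠ p.2) = phiI g (rsum [seq p.1 ⊠ p.2 | p <- qb]).
    by rewrite (rlin_rsum _ (rlin_phiI Hg)) big_map.
  rewrite (g_qbl G); case: (rlin_phiI Hg) => _ ->.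
  rewrite mulrA mulfV ?(g_lam G) // mul1r /phiI evf_t1 //.
  by apply: eq_bigr => p _; rewrite g_mul1l.
- move=> x; apply: tens_ext => g Hg; rewrite evf_rsumT // !big_map.
  rewrite -[RHS](evf_ext x (fun a b => sum_qb1 a b Hg)) evf_sumf.
  by apply: eq_bigr => p _; exact: (qbn1_term x p.2 p.1 Hg).
- move=> x; apply: tens_ext => g Hg; rewrite evf_rsumT // !big_map.
  rewrite -[RHS](evf_ext x (fun a b => sum_qb2 a b Hg)) evf_sumf.
  by apply: eq_bigr => p _; exact: (qbn2_term x p.2 p.1 Hg).
- apply: tens_ext => g Hg; rewrite evf_rsumT // !big_map /= evf_tscale // evf_t1 // mulr_sumr.
  apply: eq_bigr => p _; rewrite /= -/(pt _ _) tmulZl evf_tscale // pt_mul evf_pt //.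
  by rewrite g_mul1l // (g_E1 G) g_mul1r.
- exact: (g_lam G).
Qed.

Lemma tmul0r (x : T) : tmul (t0 D) x = t0 D.
Proof. by apply: tens_ext => g Hg; rewrite evf_tmul // !evf_t0 //; exact: bal_tmf. Qed.
Lemma tmulr0 (x : T) : tmul x (t0 D) = t0 D.
Proof.
apply: tens_ext => g Hg; rewrite evf_tmul // evf_t0 // -(evf_0f x).
by apply: evf_ext => a b; rewrite evf_t0 //; exact: bal_mf_in.
Qed.
Lemma tsum_mull (l : seq T) y : tmul y (tsum l) = tsum [seq tmul y x | x <- l].
Proof. elim: l => [|x l IH] /=; first exact: tmulr0. by rewrite tmulDr IH. Qed.
Lemma tsum_mulr (l : seq T) y : tmul (tsum l) y = tsum [seq tmul x y | x <- l].
Proof. elim: l => [|x l IH] /=; first exact: tmul0r. by rewrite tmulDl IH. Qed.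
Lemma tsum_scale (l : seq T) c : tscale c (tsum l) = tsum [seq tscale c x | x <- l].
Proof.
elim: l => [|x l IH] /=; last by rewrite tscD IH.
by apply: tens_ext => g Hg; rewrite evf_tscale // evf_t0 // mulr0.
Qed.
Lemma tsum_add (l1 l2 : seq T) : tadd (tsum l1) (tsum l2) = tsum (l1 ++ l2).
Proof. elim: l1 => [|x l IH] /=; first exact: tadd0. by rewrite -taddA IH. Qed.
Lemma tsum_map_add I (s : seq I) (f g : I -> T) :
  tsum [seq tadd (f i) (g i) | i <- s] = tadd (tsum [seq f i | i <- s]) (tsum [seq g i | i <- s]).
Proof.
apply: tens_ext => h Hh; rewrite evf_tadd // !evf_tsum // !big_map -big_split /=.
by apply: eq_bigr => i _; rewrite evf_tadd.
Qed.
Lemma tsum_ext I (s : seq I) (f g : I -> T) : (forall i, f i = g i) ->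
  tsum [seq f i | i <- s] = tsum [seq g i | i <- s].
Proof. by move=> H; congr tsum; apply: eq_map. Qed.

Section Sep.
Hypothesis sepR : forall x y : R, (forall phi, rlinear phi -> phi x = phi y) -> x = y.

Lemma tER_add (x y : T) : tER (tadd x y) = tER x ⊞ tER y.
Proof.
apply: sepR => phi Hphi; case: (Hphi) => Ha _.
by rewrite Ha !tER_lin // evf_tadd //; exact: bal_tERf.
Qed.
Lemma tER_scale c (x : T) : tER (tscale c x) = c ⊙ tER x.
Proof.
apply: sepR => phi Hphi; case: (Hphi) => _ Hs.
by rewrite Hs !tER_lin // evf_tscale //; exact: bal_tERf.
Qed.
Lemma tER_t0 : tER (t0 D) = 0r.
Proof.
apply: sepR => phi Hphi; rewrite tER_lin // evf_t0; last exact: bal_tERf.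
by case: Hphi => _ Hs; rewrite -(rscale0 0r) Hs mul0r.
Qed.
Lemma tER_pt a b : tER (pt a b) = lam ⊙ (a ⊠ b).
Proof.
apply: sepR => phi Hphi; case: (Hphi) => _ Hs.
by rewrite Hs tER_lin // evf_pt //; exact: bal_tERf.
Qed.
Lemma tER_inclL r (x : T) : tER (tmul (incl r) x) = r ⊠ tER x.
Proof.
apply: sepR => phi Hphi.
have Hphi' : rlinear (fun w => phi (r ⊠ w)).
  by apply: rlin_comp => // *; rewrite ?g_mulDr ?g_mulZr.
rewrite (tER_lin _ Hphi) (tER_lin _ Hphi') evf_inclmul //; last exact: bal_tERf.
by apply: evf_ext => a b; rewrite g_mulA.
Qed.
Lemma tER_inclR r (x : T) : tER (tmul x (incl r)) = tER x ⊠ r.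
Proof.
apply: sepR => phi Hphi.
have Hphi' : rlinear (fun w => phi (w ⊠ r)).
  by apply: rlin_comp => // *; rewrite ?g_mulDl ?g_mulZl.
rewrite (tER_lin _ Hphi) (tER_lin _ Hphi') evf_mulincl //; last exact: bal_tERf.
by apply: evf_ext => a b; rewrite g_mulA.
Qed.
Lemma tER_t1 : tER (t1 D) = 1r.
Proof.
apply: sepR => phi Hphi; rewrite tER_lin // evf_t1 //; last exact: bal_tERf.
rewrite -mulr_sumr.
have -> : \sum_(p <- qb) phi (p.1 ⊠ p.2) = phi (rsum [seq p.1 ⊠ p.2 | p <- qb]).
  by rewrite (rlin_rsum _ Hphi) big_map.
rewrite (g_qbl G).
by case: Hphi => _ ->; rewrite mulrA mulfV ?(g_lam G) // mul1r.
Qed.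
Lemma tER_tsum (l : seq T) : tER (tsum l) = rsum [seq tER x | x <- l].
Proof. elim: l => [|x l IH] /=; first exact: tER_t0. by rewrite tER_add IH. Qed.
End Sep.

End Gen.

Lemma lam_arith (k : fieldType) (lambda S K : k) : lambda != 0 ->
  lambda^-2 * lambda^-2 * S = lambda^-2 * K -> S = lambda^+2 * K.
Proof.
move=> Hl H.
have l2 : lambda^+2 != 0 by rewrite expf_neq0.
apply: (@mulfI _ (lambda^-2 * lambda^-2)); first by rewrite mulf_neq0 // invr_neq0.
by rewrite H -mulrA mulKf.
Qed.

Section Main.
Variables (k : fieldType) (M : algType k) (N : {pred M}) (E : M -> M) (qb : seq (M * M)) (lambda : k).
Hypothesis HN : subalg_closed N.
Hypothesis Hirr : forall m : M, (forall n, n \in N -> m * n = n * m) -> exists c : k, m = c%:A.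
Hypothesis HES : forall m, E m \in N.
Hypothesis HED : forall m m', E (m + m') = E m + E m'.
Hypothesis HEL : forall n m, n \in N -> E (n * m) = n * E m.
Hypothesis HER : forall n m, n \in N -> E (m * n) = E m * n.
Hypothesis Hqb1 : forall m, \sum_(p <- qb) E (m * p.1) * p.2 = m.
Hypothesis Hqb2 : forall m, \sum_(p <- qb) p.1 * E (p.2 * m) = m.
Hypothesis HE1 : E 1 = 1.
Hypothesis Hlam : lambda != 0.
Hypothesis Hqbl : \sum_(p <- qb) p.1 * p.2 = lambda^-1%:A.

Local Notation D0 := (base_data N E qb lambda).
Local Notation D1 := (Defs.next D0).
Local Notation T1 := (tens D0).
Local Notation T2 := (tens D1).

Lemma rsumM (l : seq M) : rsum (R := ralg_of M) l = \sum_(x <- l) x.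
Proof. by elim: l => [|x l IH] /=; rewrite ?big_nil ?big_cons // IH. Qed.

Lemma N0 : 0 \in N.
Proof. case: HN => H1 Hl _; have := Hl (-1) 1 1 H1 H1; by rewrite scaleN1r addNr. Qed.
Lemma Nalg c : c%:A \in N.
Proof. case: HN => H1 Hl _; have := Hl c 1 0 H1 N0; by rewrite addr0. Qed.

Lemma EZ c x : E (c *: x) = c *: E x.
Proof. by rewrite -mulr_algl HEL ?Nalg // mulr_algl. Qed.

Lemma E0M : E 0 = 0.
Proof. by have := EZ 0 0; rewrite !scale0r. Qed.

Lemma G0 : good D0.
Proof.
split => /=.
- exact: addrA.
- exact: addrC.
- exact: add0r.
- by move=> x; rewrite scaleN1r subrr.
- by move=> *; rewrite scalerDr.
- by move=> *; rewrite scalerDl.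
- by move=> *; rewrite scalerA.
- exact: scale1r.
- exact: mulrA.
- exact: mulrDl.
- exact: mulrDr.
- by move=> *; rewrite scalerAl.
- by move=> *; rewrite scalerAr.
- exact: mul1r.
- exact: mulr1.
- exact: HES.
- exact: HED.
- exact: EZ.
- exact: HEL.
- exact: HER.
- exact: HE1.
- by move=> x; rewrite rsumM big_map Hqb1.
- by move=> x; rewrite rsumM big_map Hqb2.
- by rewrite rsumM big_map Hqbl.
- exact: Hlam.
Qed.

Lemma G1 : good D1.
Proof. exact: good_next G0. Qed.

Lemma sep1 : forall x y : bR D1, (forall phi : bR D1 -> k, rlinear phi -> phi x = phi y) -> x = y.
Proof. exact: tens_sep. Qed.

Definition actx (b : T2) (x : T1) : T1 :=
  tscale lambda^-1 (tER (tmul (tmul b (incl (D := D1) x)) (jones D1))).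

Lemma actE b x : act (D0 := D0) b x = actx b x.
Proof. by []. Qed.

Definition E1 (x : T1) : T1 := incl (tER x).

Lemma act_pt X Y x : actx (pt X Y) x = tmul X (E1 (tmul Y x)).
Proof.
rewrite /actx (pt_incl G1) jonesE (pt_mul G1) (tER_pt G1 sep1) /=.
by rewrite tscM mulVf // tsc1 !(tmul1r G0).
Qed.


Definition inS1 (s : T1) := exists r : M, s = incl (D:=D0) r.

Lemma pt_mul1 (X Y X' Y' : T1) : tmul (pt (D:=D1) X Y) (pt (D:=D1) X' Y') = pt (D:=D1) (tmul X (E1 (tmul Y X'))) Y'.
Proof. exact: (pt_mul G1). Qed.
Lemma pt_incl1 (X Y Z : T1) : tmul (pt (D:=D1) X Y) (incl (D:=D1) Z) = pt (D:=D1) X (tmul Y Z).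
Proof. exact: (pt_incl G1). Qed.
Lemma incl_pt1 (Z X Y : T1) : tmul (incl (D:=D1) Z) (pt (D:=D1) X Y) = pt (D:=D1) (tmul Z X) Y.
Proof. exact: (incl_pt G1). Qed.
Lemma pt_S1 (s X Y : T1) : inS1 s -> pt (D:=D1) (tmul X s) Y = pt (D:=D1) X (tmul s Y).
Proof. move=> Hs; exact: (pt_S (D:=D1) X Y Hs). Qed.
Lemma pt_add1_1 (X X' Y : T1) : pt (D:=D1) (tadd X X') Y = tadd (pt (D:=D1) X Y) (pt (D:=D1) X' Y).
Proof. exact: (pt_add1 (D:=D1)). Qed.
Lemma pt_add2_1 (X Y Y' : T1) : pt (D:=D1) X (tadd Y Y') = tadd (pt (D:=D1) X Y) (pt (D:=D1) X Y').
Proof. exact: (pt_add2 (D:=D1)). Qed.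
Lemma pt_sc1_1 c (X Y : T1) : pt (D:=D1) (tscale c X) Y = tscale c (pt (D:=D1) X Y).
Proof. exact: (pt_sc1 (D:=D1)). Qed.
Lemma pt_sc2_1 c (X Y : T1) : pt (D:=D1) X (tscale c Y) = tscale c (pt (D:=D1) X Y).
Proof. exact: (pt_sc2 (D:=D1)). Qed.
Lemma tER_pt1 (X Y : T1) : tER (pt (D:=D1) X Y) = tscale lambda (tmul X Y).
Proof. exact: (tER_pt G1 sep1). Qed.
Lemma tER_add1 (x y : T2) : tER (tadd x y) = tadd (tER x) (tER y).
Proof. exact: (tER_add G1 sep1). Qed.
Lemma tER_scale1 c (x : T2) : tER (tscale c x) = tscale c (tER x).
Proof. exact: (tER_scale G1 sep1). Qed.
Lemma tER_t0_1 : tER (t0 D1) = t0 D0.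
Proof. exact: (tER_t0 G1 sep1). Qed.
Lemma tER_inclL1 (Z : T1) (x : T2) : tER (tmul (incl (D:=D1) Z) x) = tmul Z (tER x).
Proof. exact: (tER_inclL G1 sep1). Qed.
Lemma tER_inclR1 (Z : T1) (x : T2) : tER (tmul x (incl (D:=D1) Z)) = tmul (tER x) Z.
Proof. exact: (tER_inclR G1 sep1). Qed.
Lemma incl_mul1 (X Y : T1) : incl (D:=D1) (tmul X Y) = tmul (incl (D:=D1) X) (incl (D:=D1) Y).
Proof. exact: (incl_mul G1). Qed.
Lemma incl_add_1 (X Y : T1) : incl (D:=D1) (tadd X Y) = tadd (incl (D:=D1) X) (incl (D:=D1) Y).
Proof. exact: (incl_add G1). Qed.
Lemma incl_scale_1 c (X : T1) : incl (D:=D1) (tscale c X) = tscale c (incl (D:=D1) X).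
Proof. exact: (incl_scale G1). Qed.
Lemma incl1_1 : incl (D:=D1) (t1 D0) = t1 D1.
Proof. exact: (incl1 G1). Qed.
Lemma jones1E : jones D1 = pt (D:=D1) (t1 D0) (t1 D0).
Proof. by []. Qed.

Lemma E1D (x y : T1) : E1 (tadd x y) = tadd (E1 x) (E1 y).
Proof. exact: (g_ED G1). Qed.
Lemma E1Z c (x : T1) : E1 (tscale c x) = tscale c (E1 x).
Proof. exact: (g_EZ G1). Qed.
Lemma E1L (s x : T1) : inS1 s -> E1 (tmul s x) = tmul s (E1 x).
Proof. exact: (g_EL G1). Qed.
Lemma E1R (s x : T1) : inS1 s -> E1 (tmul x s) = tmul (E1 x) s.
Proof. exact: (g_ER G1). Qed.
Lemma E1S (x : T1) : inS1 (E1 x).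
Proof. by exists (tER x). Qed.
Lemma E1_0 : E1 (t0 D0) = t0 D0.
Proof. exact: (E0 G1). Qed.
Lemma inS1_incl (r : M) : inS1 (incl (D:=D0) r).
Proof. by exists r. Qed.

Lemma pt_mul0 (a b c d : M) : tmul (pt (D:=D0) a b) (pt (D:=D0) c d) = pt (D:=D0) (a * E (b * c)) d.
Proof. exact: (pt_mul G0). Qed.
Lemma pt_incl0 (a b r : M) : tmul (pt (D:=D0) a b) (incl (D:=D0) r) = pt (D:=D0) a (b * r).
Proof. exact: (pt_incl G0). Qed.
Lemma incl_pt0 (r a b : M) : tmul (incl (D:=D0) r) (pt (D:=D0) a b) = pt (D:=D0) (r * a) b.
Proof. exact: (incl_pt G0). Qed.
Lemma pt_S0 (s a b : M) : s \in N -> pt (D:=D0) (a * s) b = pt (D:=D0) a (s * b).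
Proof. move=> Hs; exact: (pt_S (D:=D0) a b Hs). Qed.
Lemma incl_mul0 (r s : M) : incl (D:=D0) (r * s) = tmul (incl (D:=D0) r) (incl (D:=D0) s).
Proof. exact: (incl_mul G0). Qed.
Lemma incl_add0 (r s : M) : incl (D:=D0) (r + s) = tadd (incl (D:=D0) r) (incl (D:=D0) s).
Proof. exact: (incl_add G0). Qed.
Lemma incl_scale0 c (r : M) : incl (D:=D0) (c *: r) = tscale c (incl (D:=D0) r).
Proof. exact: (incl_scale G0). Qed.
Lemma incl1_0 : incl (D:=D0) 1 = t1 D0.
Proof. exact: (incl1 G0). Qed.

Lemma act_t0b x : actx (t0 D1) x = t0 D0.
Proof.
rewrite /actx (tmul0r G1) (tmul0r G1) tER_t0_1.
by apply: (tens_ext) => g Hg; rewrite evf_tscale // evf_t0 // mulr0.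
Qed.
Lemma act_addb b b' x : actx (tadd b b') x = tadd (actx b x) (actx b' x).
Proof. by rewrite /actx !(tmulDl G1) tER_add1 tscD. Qed.
Lemma act_scaleb c b x : actx (tscale c b) x = tscale c (actx b x).
Proof. by rewrite /actx !(tmulZl G1) tER_scale1 !tscM mulrC. Qed.
Lemma act_addx b x y : actx b (tadd x y) = tadd (actx b x) (actx b y).
Proof. by rewrite /actx incl_add_1 (tmulDr G1) (tmulDl G1) tER_add1 tscD. Qed.
Lemma act_scalex c b x : actx b (tscale c x) = tscale c (actx b x).
Proof. by rewrite /actx incl_scale_1 (tmulZr G1) (tmulZl G1) tER_scale1 !tscM mulrC. Qed.
Lemma act_t0x b : actx b (t0 D0) = t0 D0.
Proof.
have := act_scalex 0 b (t0 D0).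
have H0 : forall z : T1, tscale 0 z = t0 D0.
  by move=> z; apply: tens_ext => g Hg; rewrite evf_tscale // evf_t0 // mul0r.
by rewrite !H0.
Qed.

Lemma act_mul b b' x : actx (tmul b b') x = actx b (actx b' x).
Proof.
elim/(tens_ind (D:=D1)): b b' x.
- by move=> b' x; rewrite (tmul0r G1) !act_t0b.
- by move=> b1 b2 IH1 IH2 b' x; rewrite (tmulDl G1) !act_addb IH1 IH2.
- by move=> c b IH b' x; rewrite (tmulZl G1) !act_scaleb IH.
move=> X Y b'; elim/(tens_ind (D:=D1)): b'.
- by move=> x; rewrite (tmulr0 G1) act_t0b act_t0x.
- by move=> b1 b2 IH1 IH2 x; rewrite (tmulDr G1) act_addb IH1 IH2 act_addb act_addx.
- by move=> c b IH x; rewrite (tmulZr G1) act_scaleb IH act_scaleb act_scalex.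
move=> X' Y' x; rewrite pt_mul1 !act_pt -(tmulA G0); congr tmul.
by rewrite (tmulA G0) (E1R _ (E1S _)).
Qed.

Lemma act_tsumb (l : seq T2) x : actx (tsum l) x = tsum [seq actx b x | b <- l].
Proof. elim: l => [|b l IH] /=; first exact: act_t0b. by rewrite act_addb IH. Qed.

Lemma act_one x : actx (t1 D1) x = x.
Proof.
rewrite (t1E D1) act_tsumb -map_comp.
transitivity (tsum [seq tmul p.1 (E1 (tmul p.2 x)) | p <- bqb D1]); last exact: (g_qb2 G1 x).
by congr tsum; apply: eq_map => p /=; rewrite act_pt.
Qed.


Lemma tsum_ext_in (I : Type) (d : seq I) (f g : I -> T1) :
  (forall p, List.In p d -> f p = g p) -> tsum [seq f p | p <- d] = tsum [seq g p | p <- d].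
Proof.
elim: d => [|p d IH] //= H; rewrite H; last by left.
by rewrite IH // => q Hq; apply: H; right.
Qed.
Lemma big_ext_in (I : Type) (d : seq I) (f g : I -> M) :
  (forall p, List.In p d -> f p = g p) -> \sum_(p <- d) f p = \sum_(p <- d) g p.
Proof.
elim: d => [|p d IH] H; rewrite ?big_nil // !big_cons H; last by left.
by rewrite IH // => q Hq; apply: H; right.
Qed.

Lemma tsum_sandwich (I : Type) (s : seq I) (f : I -> T1) y z :
  tmul (tmul y (tsum [seq f p | p <- s])) z = tsum [seq tmul (tmul y (f p)) z | p <- s].
Proof.
elim: s => [|p s IH] /=; first by rewrite (tmulr0 G0) (tmul0r G0).
by rewrite (tmulDr G0) (tmulDl G0) IH.
Qed.

Lemma T1_trivial : t1 D0 = t0 D0 -> forall x y : T1, x = y.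
Proof.
move=> H x y; rewrite -(tmul1r G0 x) -(tmul1r G0 y) H.
by rewrite !(tmulr0 G0).
Qed.

Definition inA' (Y : T1) := forall n, n \in N -> tmul Y (incl (D:=D0) n) = tmul (incl (D:=D0) n) Y.
Definition inB' (p : T2) := forall r : M,
  tmul p (incl (D:=D1) (incl (D:=D0) r)) = tmul (incl (D:=D1) (incl (D:=D0) r)) p.

Lemma inA_mul Y Y' : inA' Y -> inA' Y' -> inA' (tmul Y Y').
Proof. by move=> H H' n Hn; rewrite -(tmulA G0) H' // !(tmulA G0) H. Qed.
Lemma inA_t1 : inA' (t1 D0).
Proof. by move=> n _; rewrite (tmul1l G0) (tmul1r G0). Qed.
Lemma inA_add Y Y' : inA' Y -> inA' Y' -> inA' (tadd Y Y').
Proof. by move=> H H' n Hn; rewrite (tmulDl G0) (tmulDr G0) H // H'. Qed.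
Lemma inA_scale c Y : inA' Y -> inA' (tscale c Y).
Proof. by move=> H n Hn; rewrite (tmulZl G0) (tmulZr G0) H. Qed.
Lemma inA_t0 : inA' (t0 D0).
Proof. by move=> n _; rewrite (tmulr0 G0) (tmul0r G0). Qed.
Lemma inA_tsum (l : seq T1) : (forall Y, List.In Y l -> inA' Y) -> inA' (tsum l).
Proof.
elim: l => [|Y l IH] H /=; first exact: inA_t0.
by apply: inA_add; [apply: H; left | apply: IH => Z HZ; apply: H; right].
Qed.

Lemma incl0_0 : incl (D:=D0) 0 = t0 D0.
Proof.
have := incl_scale0 0 0; rewrite scale0r => ->.
by apply: tens_ext => g Hg; rewrite evf_tscale // evf_t0 // mul0r.
Qed.

Section Depth.
Variable m : nat.
Variable bs : 'I_m -> T1.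
Hypothesis HbsA : forall i, inA' (bs i).
Definition comb (cs : 'I_m -> M) : T1 := tsum [seq tmul (bs i) (incl (D:=D0) (cs i)) | i <- enum 'I_m].
Hypothesis Hspan : forall x : T1, exists cs, x = comb cs.
Hypothesis Huniq : forall cs cs', comb cs = comb cs' -> cs = cs'.

Lemma comb_add cs cs' : tadd (comb cs) (comb cs') = comb (fun i => cs i + cs' i).
Proof.
rewrite /comb -tsum_map_add; apply: tsum_ext => i.
by rewrite incl_add0 (tmulDr G0).
Qed.
Lemma comb_lmul n cs : n \in N -> tmul (incl (D:=D0) n) (comb cs) = comb (fun i => n * cs i).
Proof.
move=> Hn; rewrite /comb (tsum_mull G0) -map_comp; apply: tsum_ext => i /=.
by rewrite (tmulA G0) -HbsA // -(tmulA G0) incl_mul0.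
Qed.
Lemma comb_rmul r cs : tmul (comb cs) (incl (D:=D0) r) = comb (fun i => cs i * r).
Proof.
rewrite /comb (tsum_mulr G0) -map_comp; apply: tsum_ext => i /=.
by rewrite -(tmulA G0) -incl_mul0.
Qed.
Lemma comb0 : comb (fun _ => 0) = t0 D0.
Proof.
rewrite /comb; elim: (enum 'I_m) => [|i l IH] //=.
by rewrite IH incl0_0 (tmulr0 G0) tadd0.
Qed.

Lemma comb_central Y cs : inA' Y -> Y = comb cs -> forall i n, n \in N -> cs i * n = n * cs i.
Proof.
move=> HY EY i n Hn.
have := HY n Hn; rewrite EY comb_rmul comb_lmul // => /Huniq /(congr1 (fun f => f i)).
by [].
Qed.

Lemma comb_scalar Y cs : inA' Y -> Y = comb cs -> forall i, exists c : k, cs i = c%:A.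
Proof. by move=> HY EY i; apply: Hirr => n Hn; apply: (comb_central HY EY). Qed.

Lemma incl_inj_nt : t1 D0 <> t0 D0 -> forall r r' : M, incl (D:=D0) r = incl (D:=D0) r' -> r = r'.
Proof.
move=> Hnt r r' Er.
have [cs Ecs] := Hspan (t1 D0).
have Hsc := comb_scalar inA_t1 Ecs.
have Hr : forall s : M, incl (D:=D0) s = comb (fun i => cs i * s).
  by move=> s; rewrite -comb_rmul -Ecs (tmul1l G0).
have Ec : (fun i => cs i * r) = (fun i => cs i * r') by apply: Huniq; rewrite -!Hr.
case: (classic (exists i, cs i != 0)) => [[i Hi] | Hno].
  have [c Ec'] := Hsc i.
  have Hc : c != 0 by apply: contraNneq Hi => Ec0; rewrite Ec' Ec0 scale0r.
  have := congr1 (fun f => f i) Ec => /=; rewrite Ec' !mulr_algl; exact: (scalerI Hc).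
exfalso; apply: Hnt; rewrite Ecs -comb0; congr comb.
apply: functional_extensionality => i; apply/eqP; apply: negbNE; apply/negP => Hi.
by apply: Hno; exists i.
Qed.

End Depth.

Lemma sepM_of_inj : (forall r r' : M, incl (D:=D0) r = incl (D:=D0) r' -> r = r') ->
  forall x y : bR D0, (forall phi : bR D0 -> k, rlinear phi -> phi x = phi y) -> x = y.
Proof.
move=> Hinj x y H; apply: Hinj; apply: tens_ext => g Hg.
apply: (H (fun z => evf (incl (D:=D0) z) g)); split.
- by move=> a b; rewrite /= incl_add0 evf_tadd.
- by move=> c a; rewrite /= incl_scale0 evf_tscale.
Qed.

Lemma tscale0 (x : T1) : tscale 0 x = t0 D0.
Proof. by apply: tens_ext => g Hg; rewrite evf_tscale // evf_t0 // mul0r. Qed.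

Section Sep0.
Hypothesis sepM : forall x y : bR D0, (forall phi : bR D0 -> k, rlinear phi -> phi x = phi y) -> x = y.

Lemma tER_pt0 (a b : M) : tER (pt (D:=D0) a b) = lambda *: (a * b).
Proof. exact: (tER_pt G0 sepM). Qed.
Lemma tER_add0 (x y : T1) : tER (tadd x y) = tER x + tER y.
Proof. exact: (tER_add G0 sepM). Qed.
Lemma tER_scale0 c (x : T1) : tER (tscale c x) = c *: tER x.
Proof. exact: (tER_scale G0 sepM). Qed.
Lemma tER_t0_0 : tER (t0 D0) = 0.
Proof. exact: (tER_t0 G0 sepM). Qed.
Lemma tER_inclL0 (r : M) (x : T1) : tER (tmul (incl (D:=D0) r) x) = r * tER x.
Proof. exact: (tER_inclL G0 sepM). Qed.
Lemma tER_inclR0 (r : M) (x : T1) : tER (tmul x (incl (D:=D0) r)) = tER x * r.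
Proof. exact: (tER_inclR G0 sepM). Qed.
Lemma tER_t1_0 : tER (t1 D0) = 1.
Proof. exact: (tER_t1 G0 sepM). Qed.
Lemma tER_tsum0 (l : seq T1) : tER (tsum l) = \sum_(x <- l) tER x.
Proof. by rewrite (tER_tsum G0 sepM) rsumM big_map. Qed.
Lemma E1E (x : T1) : E1 x = incl (D:=D0) (tER x).
Proof. by []. Qed.

Local Notation e1 := (jones D0).
Local Notation e2 := (jones D1).
Local Notation ι := (incl (D:=D0)).
Local Notation ι2 := (incl (D:=D1)).

Lemma incl_e1 (r : M) : tmul (ι r) e1 = pt (D:=D0) r 1.
Proof. by rewrite jonesE incl_pt0 mulr1. Qed.
Lemma e1_incl (r : M) : tmul e1 (ι r) = pt (D:=D0) 1 r.
Proof. by rewrite jonesE pt_incl0 mul1r. Qed.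
Lemma e1c (n : M) : n \in N -> tmul (ι n) e1 = tmul e1 (ι n).
Proof. by move=> Hn; rewrite incl_e1 e1_incl -{1}(mul1r n) pt_S0 // mulr1. Qed.
Lemma pt_split (a b : M) : pt (D:=D0) a b = tmul (tmul (ι a) e1) (ι b).
Proof. by rewrite incl_e1 pt_incl0 mul1r. Qed.

Definition app_def (Y : T1) (z : M) : M := lambda^-1 *: tER (tmul (tmul Y (ι z)) e1).
Fact app_key : unit. Proof. exact: tt. Qed.
Definition app := locked_with app_key app_def.
Lemma appE Y z : app Y z = app_def Y z. Proof. by rewrite /app unlock. Qed.

Lemma app_pt a b z : app (pt (D:=D0) a b) z = a * E (b * z).
Proof.
rewrite !appE /app_def pt_incl0 jonesE pt_mul0 tER_pt0 scalerA mulVf // scale1r.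
by rewrite !mulr1.
Qed.
Lemma app_add Y Y' z : app (tadd Y Y') z = app Y z + app Y' z.
Proof. by rewrite !appE /app_def !(tmulDl G0) tER_add0 scalerDr. Qed.
Lemma app_scale c Y z : app (tscale c Y) z = c *: app Y z.
Proof. by rewrite !appE /app_def !(tmulZl G0) tER_scale0 !scalerA mulrC. Qed.
Lemma app_t0 z : app (t0 D0) z = 0.
Proof. by rewrite !appE /app_def !(tmul0r G0) tER_t0_0 scaler0. Qed.
Lemma app_addz Y z z' : app Y (z + z') = app Y z + app Y z'.
Proof. by rewrite !appE /app_def incl_add0 (tmulDr G0) (tmulDl G0) tER_add0 scalerDr. Qed.
Lemma app_scalez c Y z : app Y (c *: z) = c *: app Y z.
Proof. by rewrite !appE /app_def incl_scale0 (tmulZr G0) (tmulZl G0) tER_scale0 !scalerA mulrC. Qed.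
Lemma app_0z Y : app Y 0 = 0.
Proof. by rewrite !appE /app_def incl0_0 (tmulr0 G0) (tmul0r G0) tER_t0_0 scaler0. Qed.
Lemma app_inclL w Y z : app (tmul (ι w) Y) z = w * app Y z.
Proof. by rewrite !appE /app_def -!(tmulA G0) tER_inclL0 scalerAr. Qed.
Lemma app_incl w z : app (ι w) z = w * z.
Proof. by rewrite !appE /app_def -incl_mul0 incl_e1 tER_pt0 scalerA mulVf // scale1r mulr1. Qed.
Lemma app_e1 z : app e1 z = E z.
Proof. by rewrite jonesE app_pt !mul1r. Qed.
Lemma app_mul Y Y' z : app (tmul Y Y') z = app Y (app Y' z).
Proof.
elim/(tens_ind (D:=D0)): Y' z.
- by move=> z; rewrite (tmulr0 G0) app_t0 app_0z.
- by move=> Y1 Y2 IH1 IH2 z; rewrite (tmulDr G0) !app_add IH1 IH2 app_addz.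
- by move=> c Y1 IH z; rewrite (tmulZr G0) [LHS]app_scale [X in app Y X]app_scale IH [RHS]app_scalez.
move=> a b z; rewrite app_pt !appE /app_def -!(tmulA G0); congr (_ *: tER (tmul Y _)).
by rewrite (tmulA G0) pt_incl0 jonesE pt_mul0 incl_pt0 !mulr1.
Qed.
Lemma app_rN Y z n : n \in N -> app Y (z * n) = app Y z * n.
Proof.
move=> Hn; rewrite !appE /app_def incl_mul0 -!(tmulA G0) e1c // !(tmulA G0) tER_inclR0.
by rewrite scalerAl.
Qed.


Lemma pt_sum2 a (s : seq (M * M)) (f : M * M -> M) :
  pt (D:=D0) a (\sum_(p <- s) f p) = tsum [seq pt (D:=D0) a (f p) | p <- s].
Proof.
elim: s => [|p s IH]; rewrite ?big_nil ?big_cons /=.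
  by rewrite -(scale0r (1 : M)) pt_sc2 tscale0.
by rewrite pt_add2 IH.
Qed.

Lemma app_decomp Y : Y = tsum [seq tmul (tmul (ι (app Y p.1)) e1) (ι p.2) | p <- qb].
Proof.
elim/(tens_ind (D:=D0)): Y.
- have Z : forall s : seq (M * M), tsum [seq t0 D0 | p <- s] = t0 D0.
    by elim=> [|p l IH] //=; rewrite IH tadd0.
  rewrite -{1}(Z qb).
  by apply: tsum_ext => p; rewrite app_t0 incl0_0 !(tmul0r G0).
- move=> Y1 Y2 IH1 IH2; rewrite {1}IH1 {1}IH2 -tsum_map_add; apply: tsum_ext => p.
  by rewrite app_add incl_add0 !(tmulDl G0).
- move=> c Y1 IH; rewrite {1}IH (tsum_scale) -map_comp; apply: tsum_ext => p /=.
  by rewrite app_scale incl_scale0 !(tmulZl G0).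
move=> a b; rewrite -{1}(Hqb1 b) pt_sum2; apply: tsum_ext => p.
by rewrite app_pt -pt_split -pt_S0.
Qed.

Lemma app_inj Y Y' : (forall z, app Y z = app Y' z) -> Y = Y'.
Proof. by move=> H; rewrite (app_decomp Y) (app_decomp Y'); apply: tsum_ext => p; rewrite H. Qed.

Lemma E_nondeg v v' : (forall u, E (u * v) = E (u * v')) -> v = v'.
Proof. by move=> H; rewrite -(Hqb2 v) -(Hqb2 v'); apply: eq_bigr => p _; rewrite H. Qed.


Definition gfun (p : T2) (x : T1) : T1 := tscale lambda^-1 (tER (tmul (tmul e2 (ι2 x)) p)).
Definition Sp (p : T2) : T1 := tER (tmul (tmul e2 (ι2 e1)) p).

Lemma e2c r : tmul (ι2 (ι r)) e2 = tmul e2 (ι2 (ι r)).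
Proof.
rewrite jones1E incl_pt1 pt_incl1 (tmul1r G0) (tmul1l G0).
by have := pt_S1 (t1 D0) (t1 D0) (inS1_incl r); rewrite (tmul1l G0) (tmul1r G0).
Qed.

Lemma act_lmul p r x : inB' p -> actx p (tmul (ι r) x) = tmul (ι r) (actx p x).
Proof.
move=> Hp; rewrite /actx incl_mul1 (tmulA G1) Hp -!(tmulA G1) tER_inclL1.
by rewrite (tmulZr G0).
Qed.
Lemma act_rmul p r x : inB' p -> actx p (tmul x (ι r)) = tmul (actx p x) (ι r).
Proof.
move=> Hp; rewrite /actx incl_mul1 -!(tmulA G1) e2c !(tmulA G1) tER_inclR1.
by rewrite (tmulZl G0).
Qed.
Lemma gfun_rmul p r x : inB' p -> gfun p (tmul x (ι r)) = tmul (gfun p x) (ι r).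
Proof.
move=> Hp; rewrite /gfun incl_mul1 -!(tmulA G1) -Hp !(tmulA G1) tER_inclR1.
by rewrite (tmulZl G0).
Qed.
Lemma gfun_t0 x : gfun (t0 D1) x = t0 D0.
Proof. by rewrite /gfun (tmulr0 G1) tER_t0_1; apply: tens_ext => g Hg; rewrite evf_tscale // evf_t0 // mulr0. Qed.
Lemma gfun_add p p' x : gfun (tadd p p') x = tadd (gfun p x) (gfun p' x).
Proof. by rewrite /gfun (tmulDr G1) tER_add1 tscD. Qed.
Lemma gfun_scale c p x : gfun (tscale c p) x = tscale c (gfun p x).
Proof. by rewrite /gfun (tmulZr G1) tER_scale1 !tscM mulrC. Qed.
Lemma gfun_pt X Y x : gfun (pt (D:=D1) X Y) x = tmul (E1 (tmul x X)) Y.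
Proof.
rewrite /gfun jones1E pt_incl1 pt_mul1 tER_pt1 tscM mulVf // tsc1.
by rewrite !(tmul1l G0).
Qed.

Lemma I2 p x' x : tER (tmul x' (actx p x)) = tER (tmul (gfun p x') x).
Proof.
elim/(tens_ind (D:=D1)): p.
- by rewrite act_t0b gfun_t0 (tmulr0 G0) (tmul0r G0).
- by move=> p1 p2 IH1 IH2; rewrite act_addb gfun_add (tmulDr G0) (tmulDl G0) !tER_add0 IH1 IH2.
- by move=> c p IH; rewrite act_scaleb gfun_scale (tmulZr G0) (tmulZl G0) !tER_scale0 IH.
move=> X Y; rewrite act_pt gfun_pt !E1E (tmulA G0) tER_inclR0 -(tmulA G0) tER_inclL0.
by [].
Qed.

Lemma Sp_A p : inB' p -> inA' (Sp p).
Proof.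
move=> Hp n Hn; rewrite /Sp -tER_inclR1 -tER_inclL1; apply: f_equal.
rewrite -(tmulA G1) Hp (tmulA G1) -[tmul (tmul e2 (ι2 e1)) _](tmulA G1) -incl_mul1.
rewrite -e1c // incl_mul1 (tmulA G1) -e2c -!(tmulA G1).
by [].
Qed.

Lemma app_E Y u z : E (u * app Y z) = lambda^-1 *: E (tER (tmul (tmul (tmul e1 (ι u)) Y) (ι z))).
Proof.
elim/(tens_ind (D:=D0)): Y.
- rewrite app_t0 mulr0 (tmulr0 G0) (tmul0r G0) tER_t0_0.
  by rewrite E0M scaler0.
- move=> Y1 Y2 IH1 IH2; rewrite app_add mulrDr HED IH1 IH2 (tmulDr G0) (tmulDl G0).
  by rewrite tER_add0 HED scalerDr.
- move=> c Y1 IH; rewrite app_scale -scalerAr EZ IH (tmulZr G0) (tmulZl G0).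
  by rewrite tER_scale0 EZ scalerA mulrC -scalerA.
move=> a b; rewrite app_pt e1_incl pt_mul0 pt_incl0 tER_pt0 EZ scalerA mulVf // scale1r.
by rewrite mulrA (HER _ (HES _)) mul1r (HEL _ (HES _)).
Qed.

Lemma tER_app Y u z : tER (tmul (tmul (tmul Y (ι u)) e1) (ι z)) = lambda *: (app Y u * z).
Proof. by rewrite tER_inclR0 appE /app_def -scalerAl scalerA divff // scale1r. Qed.

Lemma S3 p u z : inB' p -> E (u * app (actx p e1) z) = lambda^-1 *: E (app (Sp p) u * z).
Proof.
move=> Hp; rewrite app_E -(tmulA G0) -act_rmul // I2 gfun_rmul // (tmulA G0).
rewrite tER_app /gfun -/(Sp p) app_scale -scalerAl EZ EZ [lambda *: _]scalerA mulfV //.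
by rewrite scale1r.
Qed.

Lemma pairingE a p : pairing (D0:=D0) a p = (lambda ^- 2) *: tER (tmul a (Sp p)).
Proof.
rewrite /pairing /FF /EM /EM1 /= -!(tmulA G1) [tmul e2 _](tmulA G1) tER_inclL1.
by [].
Qed.


Lemma E_sum I (s : seq I) (f : I -> M) : E (\sum_(i <- s) f i) = \sum_(i <- s) E (f i).
Proof.
elim: s => [|i s IH]; first by rewrite !big_nil E0M.
by rewrite !big_cons HED IH.
Qed.
Lemma app_tsum (l : seq T1) z : app (tsum l) z = \sum_(Y <- l) app Y z.
Proof.
elim: l => [|Y l IH]; first by rewrite big_nil app_t0.
by rewrite big_cons /= app_add IH.
Qed.
Lemma app_sumz I (s : seq I) Y (f : I -> M) : app Y (\sum_(i <- s) f i) = \sum_(i <- s) app Y (f i).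
Proof.
elim: s => [|i s IH]; first by rewrite !big_nil app_0z.
by rewrite !big_cons app_addz IH.
Qed.
Lemma incl_alg c : ι (c%:A) = tscale c (t1 D0).
Proof. by rewrite incl_scale0 incl1_0. Qed.
Lemma alg_inj (c c' : k) : c%:A = c'%:A :> M -> c = c'.
Proof.
move=> H; apply/eqP; rewrite -subr_eq0.
have : (c - c') *: (1 : M) == 0 by rewrite scalerBl H subrr.
by rewrite scaler_eq0 oner_eq0 orbF.
Qed.

Lemma tER_A Y : inA' Y -> exists c : k, tER Y = c%:A.
Proof.
move=> HY; apply: Hirr => n Hn.
by rewrite -tER_inclR0 HY // tER_inclL0.
Qed.
Lemma exk (Y : T1) : exists c : k, inA' Y -> tER Y = c%:A.
Proof.
case: (classic (inA' Y)) => [HY | HY].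
  by have [c Hc] := tER_A HY; exists c.
by exists 0.
Qed.
Definition kap (Y : T1) : k := proj1_sig (constructive_indefinite_description _ (exk Y)).
Lemma kapE Y : inA' Y -> tER Y = (kap Y)%:A.
Proof. by rewrite /kap; case: constructive_indefinite_description => c /= H /H. Qed.

Section Depth2.
Variable m : nat.
Variable bs : 'I_m -> T1.
Hypothesis HbsA : forall i, inA' (bs i).
Hypothesis Hspan : forall x : T1, exists cs, x = comb bs cs.
Hypothesis Huniq : forall cs cs', comb bs cs = comb bs cs' -> cs = cs'.

Lemma tER_tmul_comb (a : T1) cs : tER (tmul a (comb bs cs)) = \sum_(i <- enum 'I_m) tER (tmul a (bs i)) * cs i.
Proof.
rewrite /comb (tsum_mull G0) -map_comp tER_tsum0 big_map; apply: eq_bigr => i _ /=.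
by rewrite (tmulA G0) tER_inclR0.
Qed.

Lemma zero_of_tER (a : T1) : (forall x : T1, tER (tmul a x) = 0) -> a = t0 D0.
Proof.
move=> H; rewrite -(g_qb1 G1 a).
elim: (bqb D1) => [|p l IH] //=.
by rewrite IH H incl0_0 (tmul0r G0) tadd0.
Qed.

Lemma comb_alg (v : 'I_m -> k) :
  comb bs (fun j => (v j)%:A) = tsum [seq tscale (v j) (bs j) | j <- enum 'I_m].
Proof. by apply: tsum_ext => j; rewrite incl_alg (tmulZr G0) (tmul1r G0). Qed.

Definition Pm : 'M[k]_m := \matrix_(i, j) kap (tmul (bs i) (bs j)).

Lemma Pm_free : row_free Pm.
Proof.
apply: inj_row_free => v Hv.
set a := tsum [seq tscale (v 0 j) (bs j) | j <- enum 'I_m].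
have Ha : forall l, tER (tmul a (bs l)) = 0.
  move=> l; rewrite /a (tsum_mulr G0) -map_comp tER_tsum0 big_map.
  have := congr1 (fun A : 'M[k]_(1,m) => A 0 l) Hv; rewrite !mxE => Hs.
  rewrite (eq_bigr (fun j => (v 0 j * Pm j l)%:A)); last first.
    move=> j _ /=; rewrite (tmulZl G0) tER_scale0 kapE; last exact: inA_mul.
    by rewrite mxE scalerA.
  rewrite -(big_map (fun j => (v 0 j * Pm j l)) xpredT (fun c => c%:A)).
  rewrite -[\sum_(i <- _) _%:A](@raddf_sum _ _ (in_alg M)) big_map big_enum /=.
  by rewrite Hs scale0r.
have Ha0 : a = t0 D0.
  apply: zero_of_tER => x; have [cs ->] := Hspan x.
  by rewrite tER_tmul_comb big1 // => i _; rewrite Ha mul0r.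
have : comb bs (fun j => (v 0 j)%:A) = comb bs (fun _ => 0) by rewrite comb0 comb_alg.
move=> /Huniq Hc; apply/rowP => j; rewrite mxE.
have := congr1 (fun f => f j) Hc => /= H0.
by apply: alg_inj; rewrite H0 scale0r.
Qed.

Definition Qm := invmx Pm.
Definition a' (i : 'I_m) : T1 := tsum [seq tscale (Qm i j) (bs j) | j <- enum 'I_m].

Lemma a'A i : inA' (a' i).
Proof.
apply: inA_tsum => Y; rewrite /a' => /List.in_map_iff [j [<- _]].
exact: inA_scale.
Qed.

Lemma tER_a'bs i l : tER (tmul (a' i) (bs l)) = ((i == l)%:R : k)%:A.
Proof.
rewrite /a' (tsum_mulr G0) -map_comp tER_tsum0 big_map.
rewrite (eq_bigr (fun j => (Qm i j * Pm j l)%:A)); last first.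
  move=> j _ /=; rewrite (tmulZl G0) tER_scale0 kapE; last exact: inA_mul.
  by rewrite mxE scalerA.
rewrite -(big_map (fun j => (Qm i j * Pm j l)) xpredT (fun c => c%:A)).
rewrite -[\sum_(i <- _) _%:A](@raddf_sum _ _ (in_alg M)) big_map big_enum /=.
have HPu : Pm \in unitmx by rewrite -row_free_unit; exact: Pm_free.
have := congr1 (fun A : 'M[k]_m => A i l) (mulVmx HPu) => /=.
by rewrite !mxE => <-.
Qed.

Lemma dual_exp x : x = tsum [seq tmul (bs i) (ι (tER (tmul (a' i) x))) | i <- enum 'I_m].
Proof.
have [cs ->] := Hspan x.
apply: tsum_ext => i; congr (tmul _ (ι _)).
rewrite tER_tmul_comb big_enum /= (bigD1 i) //= big1 ?addr0.
  by rewrite tER_a'bs eqxx mulr_algl scale1r.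
by move=> j Hj; rewrite tER_a'bs eq_sym (negPf Hj) scale0r mul0r.
Qed.

Lemma Z_exp Z : inA' Z -> Z = tsum [seq tscale (kap (tmul (a' i) Z)) (bs i) | i <- enum 'I_m].
Proof.
move=> HZ; rewrite {1}(dual_exp Z); apply: tsum_ext => i.
by rewrite kapE ?incl_alg ?(tmulZr G0) ?(tmul1r G0) //; apply: inA_mul => //; exact: a'A.
Qed.

Lemma app_Z Z v : inA' Z -> app Z v = \sum_(i <- enum 'I_m) kap (tmul (a' i) Z) *: app (bs i) v.
Proof.
move=> HZ; rewrite {1}(Z_exp HZ) app_tsum big_map; apply: eq_bigr => i _.
by rewrite app_scale.
Qed.

Lemma K0 u w : lambda *: \sum_(i <- enum 'I_m) app (bs i) (app (a' i) u * w) = u * E w.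
Proof.
have H1 : forall i, app (bs i) (app (a' i) u * w) =
    lambda^-1 *: app (tmul (bs i) (ι (tER (tmul (a' i) (tmul (ι u) e1))))) w.
  move=> i; rewrite app_mul app_incl [app (a' i) u]appE /app_def -scalerAl app_scalez.
  by rewrite -(tmulA G0).
rewrite (eq_bigr _ (fun i _ => H1 i)) -scaler_sumr scalerA mulfV // scale1r.
rewrite -(big_map (fun i => tmul (bs i) (ι (tER (tmul (a' i) (tmul (ι u) e1))))) xpredT (fun Y => app Y w)).
rewrite -app_tsum.
rewrite -(dual_exp (tmul (ι u) e1)).
by rewrite app_inclL app_e1.
Qed.


Section Coprod.
Variable b : T2.
Variable d : seq (T2 * T2).
Hypothesis Hb : inB' b.
Hypothesis Hd : forall p, List.In p d -> inB' p.1 /\ inB' p.2.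
Hypothesis Hpair : forall a a', inA' a -> inA' a' ->
  \sum_(p <- d) pairing (D0:=D0) a p.1 * pairing (D0:=D0) a' p.2 = pairing (D0:=D0) (tmul a a') b.

Lemma pairing_kap a p : inA' a -> inB' p -> pairing (D0:=D0) a p = (lambda ^- 2 * kap (tmul a (Sp p)))%:A.
Proof.
move=> Ha Hp; rewrite pairingE kapE; last exact: inA_mul (Sp_A Hp).
by rewrite scalerA.
Qed.

Lemma Hk a a' : inA' a -> inA' a' ->
  \sum_(p <- d) kap (tmul a (Sp p.1)) * kap (tmul a' (Sp p.2)) = lambda ^+ 2 * kap (tmul (tmul a a') (Sp b)).
Proof.
move=> Ha Ha'; apply: lam_arith => //.
have := Hpair Ha Ha'; rewrite pairing_kap //; last exact: inA_mul.
rewrite (big_ext_in (g := fun p => ((lambda ^- 2 * kap (tmul a (Sp p.1))) * (lambda ^- 2 * kap (tmul a' (Sp p.2))))%:A)); last first.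
  move=> p Hp; have [H1 H2] := Hd Hp.
  by rewrite !pairing_kap // mulr_algl scalerA.
rewrite -(@raddf_sum _ _ (in_alg M)) => /alg_inj <-.
rewrite mulr_sumr; apply: eq_bigr => p _.
by rewrite mulrACA.
Qed.

Lemma Gmain u w : \sum_(p <- d) app (Sp p.2) (app (Sp p.1) u * w) = lambda *: (app (Sp b) u * E w).
Proof.
pose F (l i : 'I_m) := app (bs l) (app (bs i) u * w).
rewrite (big_ext_in (g := fun p => \sum_(l <- enum 'I_m) \sum_(i <- enum 'I_m)
    (kap (tmul (a' i) (Sp p.1)) * kap (tmul (a' l) (Sp p.2))) *: F l i)); last first.
  move=> p Hp; have [H1 H2] := Hd Hp.
  rewrite (app_Z _ (Sp_A H2)); apply: eq_bigr => l _.
  rewrite (app_Z _ (Sp_A H1)) mulr_suml app_sumz scaler_sumr; apply: eq_bigr => i _.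
  by rewrite -scalerAl app_scalez scalerA mulrC.
rewrite exchange_big /=; under eq_bigr => l _ do rewrite exchange_big /=.
have HkS : forall l i, \sum_(p <- d) (kap (tmul (a' i) (Sp p.1)) * kap (tmul (a' l) (Sp p.2))) *: F l i =
    (lambda^+2 * kap (tmul (tmul (a' i) (a' l)) (Sp b))) *: F l i.
  by move=> l i; rewrite -scaler_suml Hk //; exact: a'A.
under eq_bigr => l _ do under eq_bigr => i _ do rewrite HkS.
have H2 : forall l, inA' (tmul (a' l) (Sp b)) by move=> l; apply: inA_mul; [exact: a'A | exact: Sp_A].
rewrite (eq_bigr (fun l => lambda ^+ 2 *: app (bs l) (app (tmul (a' l) (Sp b)) u * w))); last first.
  move=> l _; rewrite (app_Z _ (H2 l)) mulr_suml app_sumz scaler_sumr; apply: eq_bigr => i _.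
  by rewrite -scalerAl app_scalez scalerA -(tmulA G0).
rewrite -scaler_sumr expr2 -scalerA.
under eq_bigr => l _ do rewrite app_mul.
by rewrite K0.
Qed.

Lemma star w : tsum [seq tmul (tmul (actx p.1 e1) (ι w)) (actx p.2 e1) | p <- d] =
  tmul (ι (E w)) (actx b e1).
Proof.
apply: app_inj => z; apply: E_nondeg => u.
rewrite app_tsum big_map mulr_sumr E_sum.
rewrite (big_ext_in (g := fun p => lambda^-1 *: (lambda^-1 *: E (app (Sp p.2) (app (Sp p.1) u * w) * z)))); last first.
  move=> p Hp; have [H1 H2] := Hd Hp.
  by rewrite !app_mul app_incl S3 // mulrA S3.
rewrite -!scaler_sumr -E_sum -mulr_suml Gmain -scalerAl EZ [lambda^-1 *: (lambda *: _)]scalerA mulVf // scale1r.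
by rewrite app_inclL mulrA S3 // app_rN.
Qed.

Lemma C7 x y : actx b (tmul x y) = tsum [seq tmul (actx p.1 x) (actx p.2 y) | p <- d].
Proof.
have Z0 : forall (s : seq (T2 * T2)), tsum [seq t0 D0 | p <- s] = t0 D0.
  by elim=> [|p l IH] //=; rewrite IH tadd0.
elim/(tens_ind (D:=D0)): x y.
- move=> y; rewrite (tmul0r G0) act_t0x -{1}(Z0 d); apply: tsum_ext => p.
  by rewrite act_t0x (tmul0r G0).
- move=> x1 x2 IH1 IH2 y; rewrite (tmulDl G0) act_addx IH1 IH2 -tsum_map_add.
  by apply: tsum_ext => p; rewrite act_addx (tmulDl G0).
- move=> c x IH y; rewrite (tmulZl G0) act_scalex IH tsum_scale -map_comp.
  by apply: tsum_ext => p; rewrite /= act_scalex (tmulZl G0).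
move=> a c y; elim/(tens_ind (D:=D0)): y.
- rewrite (tmulr0 G0) act_t0x -{1}(Z0 d); apply: tsum_ext => p.
  by rewrite act_t0x (tmulr0 G0).
- move=> y1 y2 IH1 IH2; rewrite (tmulDr G0) act_addx IH1 IH2 -tsum_map_add.
  by apply: tsum_ext => p; rewrite act_addx (tmulDr G0).
- move=> c' y IH; rewrite (tmulZr G0) act_scalex IH tsum_scale -map_comp.
  by apply: tsum_ext => p; rewrite /= act_scalex (tmulZr G0).
move=> c' e; rewrite pt_mul0 (pt_split (a * E (c * c'))) act_rmul // act_lmul // incl_mul0 -(tmulA G0).
rewrite (tmulA G0) -(tmulA G0 (ι a) (ι (E (c * c'))) (actx b e1)) -(star (c * c')).
rewrite tsum_sandwich.
apply: tsum_ext_in => p Hp; have [H1 H2] := Hd Hp.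
rewrite (pt_split a c) (pt_split c' e) (act_rmul c (tmul (ι a) e1) H1) (act_lmul a e1 H1).
rewrite (act_rmul e (tmul (ι c') e1) H2) (act_lmul c' e1 H2) incl_mul0.
set A := ι a; set T1' := actx p.1 e1; set T2' := actx p.2 e1; set Ic := ι c; set Ic' := ι c'; set Ie := ι e.
rewrite (tmulA G0 (tmul (tmul A T1') Ic) (tmul Ic' T2') Ie). apply: (f_equal (fun X => tmul X Ie)).
rewrite (tmulA G0 T1' Ic Ic') (tmulA G0 A (tmul (tmul T1' Ic) Ic') T2').
rewrite (tmulA G0 (tmul (tmul A T1') Ic) Ic' T2'); apply: (f_equal (fun X => tmul X T2')).
rewrite (tmulA G0 A (tmul T1' Ic) Ic') (tmulA G0 A T1' Ic); reflexivity.
Qed.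

End Coprod.
End Depth2.

Lemma C8 b : inB' b -> actx b (t1 D0) = ι (pairing (D0:=D0) (t1 D0) b).
Proof.
move=> Hb; set Y := actx b (t1 D0).
have HYc : forall r, tmul Y (ι r) = tmul (ι r) Y.
  move=> r; rewrite /Y -(act_rmul r (t1 D0) Hb) -(act_lmul r (t1 D0) Hb).
  by rewrite (tmul1l G0 (ι r)) (tmul1r G0 (ι r)).
have Happ : forall z, app Y z = z * app Y 1.
  move=> z; rewrite -(app_inclL z Y 1) -(HYc z) (app_mul Y (ι z) 1) (app_incl z 1).
  by rewrite mulr1.
have [c Hc] : exists c : k, app Y 1 = c%:A.
  apply: Hirr => n Hn; rewrite -(app_rN Y 1 Hn) mul1r (Happ n).
  by [].
have EY : Y = ι (c%:A).
  apply: app_inj => z; rewrite (app_incl (c%:A) z) (Happ z) Hc.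
  by rewrite mulr_algl mulr_algr.
have HS : tER (Sp b) = lambda *: (lambda *: c%:A).
  have -> : Sp b = tscale lambda (gfun b e1) by rewrite /gfun tscM mulfV // tsc1.
  rewrite tER_scale0 -(tmul1r G0 (gfun b e1)) -(I2 b e1 (t1 D0)) -/Y EY.
  rewrite (tER_inclR0 (c%:A) e1) jonesE tER_pt0 mulr1.
  by rewrite -scalerAl mul1r.
rewrite EY pairingE (tmul1l G0 (Sp b)) HS !scalerA.
apply: f_equal.
have Hl : lambda ^- 2 * (lambda * lambda * c) = c by rewrite -expr2 mulKf // expf_neq0.
by rewrite Hl.
Qed.
End Sep0.

Hypothesis Hd2 : depth2 D0.

Lemma main_sec : left_module_algebra D0.
Proof.
have [[m [bs [HbsA [Hspan Huniq]]]] _] := Hd2.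
case: (classic (t1 D0 = t0 D0)) => Htriv.
  split; [|split; [|split; [|split; [|split; [|split; [|split]]]]]];
    by move=> *; apply: T1_trivial.
have Hinj := incl_inj_nt HbsA Hspan Huniq Htriv.
have sepM := sepM_of_inj Hinj.
split; [|split; [|split; [|split; [|split; [|split; [|split]]]]]].
- by move=> b b' x _ _; exact: (act_mul b b' x).
- by move=> x; exact: (act_one x).
- by move=> b b' x _ _; exact: (act_addb b b' x).
- by move=> c b x _; exact: (act_scaleb c b x).
- by move=> b x y _; exact: (act_addx b x y).
- by move=> c b x _; exact: (act_scalex c b x).
- move=> b x y d Hb Hd Hp.
  have Hp' : forall a a', inA' a -> inA' a' ->
      \sum_(p <- d) pairing (D0:=D0) a p.1 * pairing (D0:=D0) a' p.2 = pairing (D0:=D0) (tmul a a') b.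
    move=> a a' Ha Ha'; rewrite -(Hp a a' Ha Ha') rsumM big_map.
    by [].
  exact: (C7 sepM HbsA Hspan Huniq Hb Hd Hp' x y).
- move=> b Hb; exact: (C8 sepM Hb).
Qed.

End Main.

Unset Implicit Arguments.

Theorem proposition5p1 (k : fieldType) (M : algType k) (N : {pred M})
    (E : M -> M) (qb : seq (M * M)) (lambda : k) :
  subalg_closed N ->
  (forall m : M, (forall n, n \in N -> m * n = n * m) -> exists c : k, m = c%:A) ->
  (forall m, E m \in N) ->
  (forall m m', E (m + m') = E m + E m') ->
  (forall n m, n \in N -> E (n * m) = n * E m) ->
  (forall n m, n \in N -> E (m * n) = E m * n) ->
  (forall m, \sum_(p <- qb) E (m * p.1) * p.2 = m) ->
  (forall m, \sum_(p <- qb) p.1 * E (p.2 * m) = m) ->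
  E 1 = 1 -> lambda != 0 -> \sum_(p <- qb) p.1 * p.2 = lambda^-1%:A ->
  depth2 (base_data N E qb lambda) ->
  left_module_algebra (base_data N E qb lambda).
Proof.
move=> HN Hirr HES HED HEL HER Hqb1 Hqb2 HE1 Hlam Hqbl Hd2.
by apply: main_sec.
Qed.
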